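(* Let $n,m\ge1$, $p_{n,m}$ stable of degree $n$ in $z$ and $m$ in $w$, and $0\le k\le m-1$. Then $a_k$ satisfies: (a) $a_k\in\operatorname{span}\{z^iw^j:0\le i\le 2n,\ 0\le j\le m-1\}$; (b) in $L^2\!\left(\frac{d\sigma}{|p_{n,m}|^2}\right)$, $a_k$ is orthogonal to all $z^iw^j$ with $0\le i\le 2n$, $0\le j\le m-1$, $j\ne k$, and to all $z^iw^k$ with $0\le i\le 2n$, $i\ne n$; (c) $\|a_k\|^2=\int_{-\pi}^{\pi}T_{k,k}(e^{i\theta})\,\frac{d\theta}{2\pi}$, the norm taken in $L^2\!\left(\frac{d\sigma}{|p_{n,m}|^2}\right)$. Moreover, any polynomial $f$ satisfying (a), (b), (c) (with $f$ in place of $a_k$) is of the form $f=c\,a_k$ with $|c|=1$.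
   Context: $\sigma$ is normalized Lebesgue measure on $\mathbb{T}^2$; $p_{n,m}$ is stable if it has no zeros in $\{|z|\le1,|w|\le1\}$. Write $p_{n,m}(z,w)=\sum_{i=0}^m p_i(z)w^i$ and $\bar p_i(z)=\overline{p_i(\bar z)}$. Set $\tilde p_{n,m}(z,w)=z^nw^m\overline{p_{n,m}(1/\bar z,1/\bar w)}$, $L(z,w;\eta)=z^n\frac{p_{n,m}(z,w)\overline{p_{n,m}(1/\bar z,\eta)}-\tilde p_{n,m}(z,w)\overline{\tilde p_{n,m}(1/\bar z,\eta)}}{1-w\bar\eta}$ (a polynomial in $z,w,\bar\eta$), and define $a_j$ by $L=\sum_{j=0}^{m-1}a_j(z,w)\bar\eta^j$. $T_m(z)$ is the $m\times m$ matrix (rows and columns indexed $0,\dots,m-1$) $T_m(z)=M_1M_2-M_3M_4$, where $M_1$ is lower triangular with $(r,s)$ entry $p_{r-s}(z)$ for $r\ge s$; $M_2$ is upper triangular with $(r,s)$ entry $\bar p_{s-r}(1/z)$ for $s\ge r$; $M_3$ is lower triangular with $(r,s)$ entry $\bar p_{m-r+s}(1/z)$ for $r\ge s$; $M_4$ is upper triangular with $(r,s)$ entry $p_{m-s+r}(z)$ for $s\ge r$. $T_{k,k}$ denotes its $(k,k)$ entry. *)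

(* Defs.v *)
From Stdlib Require Import Reals ClassicalEpsilon.
Open Scope R_scope.

Record Cplx := mkC { CRe : R; CIm : R }.
Definition C0 : Cplx := mkC 0 0.
Definition C1 : Cplx := mkC 1 0.
Definition Cadd (x y : Cplx) := mkC (CRe x + CRe y) (CIm x + CIm y).
Definition Csub (x y : Cplx) := mkC (CRe x - CRe y) (CIm x - CIm y).
Definition Cmul (x y : Cplx) :=
  mkC (CRe x * CRe y - CIm x * CIm y) (CRe x * CIm y + CIm x * CRe y).
Definition Cscale (r : R) (x : Cplx) := mkC (r * CRe x) (r * CIm x).
Definition Cconj (x : Cplx) := mkC (CRe x) (- CIm x).
Definition Cnorm2 (x : Cplx) := CRe x * CRe x + CIm x * CIm x.
Definition Cabs (x : Cplx) := sqrt (Cnorm2 x).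
Definition Cinv (x : Cplx) := mkC (CRe x / Cnorm2 x) (- CIm x / Cnorm2 x).
Fixpoint Cpow (x : Cplx) (n : nat) : Cplx :=
  match n with O => C1 | S n' => Cmul x (Cpow x n') end.
Definition Cexpi (t : R) : Cplx := mkC (cos t) (sin t).

(* csum N f = f 0 + f 1 + ... + f N  (N+1 terms) *)
Fixpoint csum (N : nat) (f : nat -> Cplx) : Cplx :=
  match N with O => f O | S N' => Cadd (csum N' f) (f N) end.

Definition peval2 (P : nat -> nat -> Cplx) (N M : nat) (z w : Cplx) : Cplx :=
  csum N (fun i => csum M (fun j => Cmul (P i j) (Cmul (Cpow z i) (Cpow w j)))).

Definition coeffs_bounded (n m : nat) (P : nat -> nat -> Cplx) : Prop :=
  forall i j, (n < i)%nat \/ (m < j)%nat -> P i j = C0.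
Definition exact_degree (n m : nat) (P : nat -> nat -> Cplx) : Prop :=
  (exists j, P n j <> C0) /\ (exists i, P i m <> C0).
Definition stable (n m : nat) (P : nat -> nat -> Cplx) : Prop :=
  forall z w, Cnorm2 z <= 1 -> Cnorm2 w <= 1 -> peval2 P n m z w <> C0.

(* p_i(z), the coefficient of w^i:  p(z,w) = sum_i p_i(z) w^i *)
Definition pw (n : nat) (P : nat -> nat -> Cplx) (i : nat) (z : Cplx) : Cplx :=
  csum n (fun i' => Cmul (P i' i) (Cpow z i')).
(* \bar p_i(z) = conj (p_i (conj z)) *)
Definition pbarw (n : nat) (P : nat -> nat -> Cplx) (i : nat) (z : Cplx) : Cplx :=
  csum n (fun i' => Cmul (Cconj (P i' i)) (Cpow z i')).

(* coefficients of the reflection  ~p(z,w) = z^n w^m conj(p(1/conj z, 1/conj w)) *)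
Definition Pt (n m : nat) (P : nat -> nat -> Cplx) (i j : nat) : Cplx :=
  if andb (Nat.leb i n) (Nat.leb j m) then Cconj (P (n - i)%nat (m - j)%nat) else C0.

(* Coefficient of z^i w^j conj(eta)^l in the numerator
   Q = z^n ( p(z,w) conj(p(1/conj z,eta)) - ~p(z,w) conj(~p(1/conj z,eta)) ). *)
Definition qcoef (n m : nat) (P : nat -> nat -> Cplx) (i j l : nat) : Cplx :=
  if andb (Nat.leb j m) (Nat.leb l m) then
    csum n (fun i1 => csum n (fun i2 =>
      if Nat.eqb (i1 + n)%nat (i + i2)%nat then
        Csub (Cmul (P i1 j) (Cconj (P i2 l)))
             (Cmul (Pt n m P i1 j) (Cconj (Pt n m P i2 l)))
      else C0))
  else C0.

(* L = Q / (1 - w conj(eta)) = Q * sum_t (w conj(eta))^t  (exact quotient);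
   acoef k i j = coefficient of z^i w^j in a_k, where L = sum_k a_k conj(eta)^k. *)
Definition acoef (n m : nat) (P : nat -> nat -> Cplx) (k i j : nat) : Cplx :=
  csum (Nat.min j k) (fun t => qcoef n m P i (j - t)%nat (k - t)%nat).

Definition RInt (f : R -> R) (a b : R) : R :=
  epsilon (inhabits 0)
    (fun v => exists pr : Riemann_integrable f a b, RiemannInt pr = v).
Definition CInt (f : R -> Cplx) (a b : R) : Cplx :=
  mkC (RInt (fun t => CRe (f t)) a b) (RInt (fun t => CIm (f t)) a b).
Definition torus_int (F : Cplx -> Cplx -> Cplx) : Cplx :=
  Cscale (/ (4 * PI ^ 2))
    (CInt (fun t => CInt (fun s => F (Cexpi t) (Cexpi s)) (- PI) PI) (- PI) PI).

Definition ip (n m : nat) (P : nat -> nat -> Cplx) (F G : Cplx -> Cplx -> Cplx)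
  : Cplx :=
  torus_int (fun z w =>
    Cscale (/ Cnorm2 (peval2 P n m z w)) (Cmul (F z w) (Cconj (G z w)))).
Definition norm2 (n m : nat) (P : nat -> nat -> Cplx) (F : Cplx -> Cplx -> Cplx)
  : R := CRe (ip n m P F F).

Definition M1 n (P : nat -> nat -> Cplx) z (r s : nat) : Cplx :=
  if Nat.leb s r then pw n P (r - s)%nat z else C0.
Definition M2 n (P : nat -> nat -> Cplx) z (r s : nat) : Cplx :=
  if Nat.leb r s then pbarw n P (s - r)%nat (Cinv z) else C0.
Definition M3 n m (P : nat -> nat -> Cplx) z (r s : nat) : Cplx :=
  if Nat.leb s r then pbarw n P (m - r + s)%nat (Cinv z) else C0.
Definition M4 n m (P : nat -> nat -> Cplx) z (r s : nat) : Cplx :=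
  if Nat.leb r s then pw n P (m - s + r)%nat z else C0.
(* entry (r,s) of T_m(z) = M1 M2 - M3 M4, indices 0..m-1 *)
Definition Tm (n m : nat) (P : nat -> nat -> Cplx) (z : Cplx) (r s : nat) : Cplx :=
  csum (m - 1)%nat (fun u =>
    Csub (Cmul (M1 n P z r u) (M2 n P z u s))
         (Cmul (M3 n m P z r u) (M4 n m P z u s))).

Definition monomial (i j : nat) (z w : Cplx) : Cplx := Cmul (Cpow z i) (Cpow w j).

(* Conditions (a), (b), (c) for a polynomial with coefficient function f.
   Under (a), f is the polynomial  peval2 f (2n) (m-1). *)
Definition cond_abc (n m : nat) (P : nat -> nat -> Cplx) (k : nat)
  (f : nat -> nat -> Cplx) : Prop :=
  let F := peval2 f (2 * n)%nat (m - 1)%nat in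
  (forall i j, (2 * n < i)%nat \/ (m - 1 < j)%nat -> f i j = C0) /\
  (forall i j, (i <= 2 * n)%nat -> (j <= m - 1)%nat -> j <> k ->
     ip n m P F (monomial i j) = C0) /\
  (forall i, (i <= 2 * n)%nat -> i <> n ->
     ip n m P F (monomial i k) = C0) /\
  mkC (norm2 n m P F) 0 =
    Cscale (/ (2 * PI)) (CInt (fun t => Tm n m P (Cexpi t) k k) (- PI) PI).

(* Main.v *)
From Stdlib Require Import Reals Lra Lia ClassicalEpsilon FunctionalExtensionality.
From Coquelicot Require Import Rcomplements Rbar Hierarchy Continuity Derive RInt RInt_analysis AutoDerive.
Require Import Defs.
Open Scope R_scope.

Lemma Ceq : forall x y, CRe x = CRe y -> CIm x = CIm y -> x = y.
Proof. intros [a b] [c d]; simpl; intros -> ->; reflexivity. Qed.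

Ltac csimpl := unfold Cadd, Csub, Cmul, Cscale, Cconj, C0, C1, Cnorm2 in *; cbn [CRe CIm] in *.
Ltac cring := apply Ceq; csimpl; ring.

Lemma Cadd_0_l x : Cadd C0 x = x. Proof. cring. Qed.
Lemma Cadd_0_r x : Cadd x C0 = x. Proof. cring. Qed.
Lemma Cmul_0_l x : Cmul C0 x = C0. Proof. cring. Qed.
Lemma Cmul_0_r x : Cmul x C0 = C0. Proof. cring. Qed.
Lemma Cmul_1_l x : Cmul C1 x = x. Proof. cring. Qed.
Lemma Cmul_1_r x : Cmul x C1 = x. Proof. cring. Qed.
Lemma Cadd_comm x y : Cadd x y = Cadd y x. Proof. cring. Qed.
Lemma Cadd_assoc x y z : Cadd x (Cadd y z) = Cadd (Cadd x y) z. Proof. cring. Qed.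
Lemma Cmul_comm x y : Cmul x y = Cmul y x. Proof. cring. Qed.
Lemma Cmul_assoc x y z : Cmul x (Cmul y z) = Cmul (Cmul x y) z. Proof. cring. Qed.
Lemma Cmul_add_l x y z : Cmul (Cadd x y) z = Cadd (Cmul x z) (Cmul y z). Proof. cring. Qed.
Lemma Cmul_add_r x y z : Cmul z (Cadd x y) = Cadd (Cmul z x) (Cmul z y). Proof. cring. Qed.
Lemma Cmul_sub_l x y z : Cmul (Csub x y) z = Csub (Cmul x z) (Cmul y z). Proof. cring. Qed.
Lemma Cmul_sub_r x y z : Cmul z (Csub x y) = Csub (Cmul z x) (Cmul z y). Proof. cring. Qed.
Lemma Cconj_add x y : Cconj (Cadd x y) = Cadd (Cconj x) (Cconj y). Proof. cring. Qed.
Lemma Cconj_sub x y : Cconj (Csub x y) = Csub (Cconj x) (Cconj y). Proof. cring. Qed.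
Lemma Cconj_mul x y : Cconj (Cmul x y) = Cmul (Cconj x) (Cconj y). Proof. cring. Qed.
Lemma Cconj_conj x : Cconj (Cconj x) = x. Proof. cring. Qed.
Lemma Cconj_0 : Cconj C0 = C0. Proof. cring. Qed.
Lemma Cconj_1 : Cconj C1 = C1. Proof. cring. Qed.
Lemma Csub_0_r x : Csub x C0 = x. Proof. cring. Qed.
Lemma Cscale_mul r x : Cscale r x = Cmul (mkC r 0) x. Proof. cring. Qed.

Lemma Cpow_add x a b : Cpow x (a + b) = Cmul (Cpow x a) (Cpow x b).
Proof. induction a; simpl. - now rewrite Cmul_1_l. - rewrite IHa. apply Cmul_assoc. Qed.
Lemma Cconj_pow x a : Cconj (Cpow x a) = Cpow (Cconj x) a.
Proof. induction a; simpl. - apply Cconj_1. - now rewrite Cconj_mul, IHa. Qed.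
Lemma Cpow_mul x y a : Cpow (Cmul x y) a = Cmul (Cpow x a) (Cpow y a).
Proof. induction a; simpl. - cring. - rewrite IHa. cring. Qed.

Lemma csum_ext N f g : (forall i, (i <= N)%nat -> f i = g i) -> csum N f = csum N g.
Proof.
  induction N; intros H; simpl. - apply H; lia.
  - rewrite IHN by (intros; apply H; lia). now rewrite H by lia.
Qed.
Lemma csum_add N f g : csum N (fun i => Cadd (f i) (g i)) = Cadd (csum N f) (csum N g).
Proof. induction N; simpl. - reflexivity. - rewrite IHN. cring. Qed.
Lemma csum_sub N f g : csum N (fun i => Csub (f i) (g i)) = Csub (csum N f) (csum N g).
Proof. induction N; simpl. - reflexivity. - rewrite IHN. cring. Qed.
Lemma csum_mul_l N c f : Cmul c (csum N f) = csum N (fun i => Cmul c (f i)).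
Proof. induction N; simpl. - reflexivity. - rewrite <- IHN. cring. Qed.
Lemma csum_mul_r N c f : Cmul (csum N f) c = csum N (fun i => Cmul (f i) c).
Proof. induction N; simpl. - reflexivity. - rewrite <- IHN. cring. Qed.
Lemma csum_zero N f : (forall i, (i <= N)%nat -> f i = C0) -> csum N f = C0.
Proof. intros H. rewrite (csum_ext N f (fun _ => C0)) by auto. clear H; induction N; simpl; [reflexivity|]. rewrite IHN. cring. Qed.
Lemma csum_conj N f : Cconj (csum N f) = csum N (fun i => Cconj (f i)).
Proof. induction N; simpl. - reflexivity. - rewrite Cconj_add, IHN. reflexivity. Qed.
Lemma csum_swap N M f : csum N (fun i => csum M (fun j => f i j)) = csum M (fun j => csum N (fun i => f i j)).
Proof.
  induction N; simpl. - reflexivity.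
  - rewrite IHN, <- csum_add. reflexivity.
Qed.

Notation CRI := Coquelicot.RInt.RInt.

Lemma RInt_eq f a b : ex_RInt f a b -> Defs.RInt f a b = CRI f a b.
Proof.
  intros H. unfold Defs.RInt.
  assert (Hpr := ex_RInt_Reals_0 _ _ _ H).
  destruct (epsilon_spec (inhabits 0) (fun v => exists pr : Riemann_integrable f a b, RiemannInt pr = v))
    as [pr Hv].
  { exists (RiemannInt Hpr), Hpr. reflexivity. }
  rewrite <- Hv. symmetry. apply RInt_Reals.
Qed.

Definition cok (F : R -> Cplx) a b :=
  ex_RInt (fun t => CRe (F t)) a b /\ ex_RInt (fun t => CIm (F t)) a b.

Lemma CInt_eq F a b : cok F a b ->
  CInt F a b = mkC (CRI (fun t => CRe (F t)) a b) (CRI (fun t => CIm (F t)) a b).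
Proof. intros [H1 H2]. unfold CInt. now rewrite !RInt_eq. Qed.

Lemma cok_add F G a b : cok F a b -> cok G a b -> cok (fun t => Cadd (F t) (G t)) a b.
Proof. intros [] []; split; apply (ex_RInt_plus (V:=R_NormedModule)); auto. Qed.

Lemma cok_sub F G a b : cok F a b -> cok G a b -> cok (fun t => Csub (F t) (G t)) a b.
Proof. intros [] []; split; apply (ex_RInt_minus (V:=R_NormedModule)); auto. Qed.

Lemma cok_mulc c F a b : cok F a b -> cok (fun t => Cmul c (F t)) a b.
Proof.
  intros [H1 H2]; split; simpl.
  - apply (ex_RInt_minus (V:=R_NormedModule)); apply (ex_RInt_scal (V:=R_NormedModule) _ _ _ _); auto.
  - apply (ex_RInt_plus (V:=R_NormedModule)); apply (ex_RInt_scal (V:=R_NormedModule) _ _ _ _); auto.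
Qed.

Lemma cok_csum N F a b : (forall i, (i <= N)%nat -> cok (F i) a b) -> cok (fun t => csum N (fun i => F i t)) a b.
Proof.
  induction N; intros H; simpl. - apply H; lia.
  - apply cok_add. + apply IHN; intros; apply H; lia. + apply H; lia.
Qed.

Lemma CInt_add F G a b : cok F a b -> cok G a b ->
  CInt (fun t => Cadd (F t) (G t)) a b = Cadd (CInt F a b) (CInt G a b).
Proof.
  intros HF HG. rewrite !CInt_eq by (auto using cok_add).
  destruct HF, HG. apply Ceq; simpl.
  - exact (RInt_plus (V:=R_CompleteNormedModule) _ _ _ _ H H1).
  - exact (RInt_plus (V:=R_CompleteNormedModule) _ _ _ _ H0 H2).
Qed.

Lemma CInt_sub F G a b : cok F a b -> cok G a b ->
  CInt (fun t => Csub (F t) (G t)) a b = Csub (CInt F a b) (CInt G a b).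
Proof.
  intros HF HG. rewrite !CInt_eq by (auto using cok_sub).
  destruct HF, HG. apply Ceq; simpl.
  - exact (RInt_minus (V:=R_CompleteNormedModule) _ _ _ _ H H1).
  - exact (RInt_minus (V:=R_CompleteNormedModule) _ _ _ _ H0 H2).
Qed.

Lemma CInt_mulc c F a b : cok F a b ->
  CInt (fun t => Cmul c (F t)) a b = Cmul c (CInt F a b).
Proof.
  intros HF. rewrite !CInt_eq by (auto using cok_mulc).
  destruct HF as [H1 H2]. apply Ceq; simpl.
  - rewrite (RInt_minus (V:=R_CompleteNormedModule)) by (apply (ex_RInt_scal (V:=R_NormedModule) _ _ _ _); auto).
    rewrite !(RInt_scal (V:=R_CompleteNormedModule)) by auto. reflexivity.
  - rewrite (RInt_plus (V:=R_CompleteNormedModule)) by (apply (ex_RInt_scal (V:=R_NormedModule) _ _ _ _); auto).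
    rewrite !(RInt_scal (V:=R_CompleteNormedModule)) by auto. reflexivity.
Qed.

Lemma CInt_csum N F a b : (forall i, (i <= N)%nat -> cok (F i) a b) ->
  CInt (fun t => csum N (fun i => F i t)) a b = csum N (fun i => CInt (F i) a b).
Proof.
  induction N; intros H; simpl. - reflexivity.
  - rewrite CInt_add. + rewrite IHN; auto.
    + apply cok_csum; intros; apply H; lia. + apply H; lia.
Qed.

Lemma CInt_ext F G a b : (forall t, F t = G t) -> CInt F a b = CInt G a b.
Proof. intros H. replace F with G; auto. apply functional_extensionality; auto. Qed.

Lemma CInt_ext_ok F G a b : cok F a b -> (forall t, Rmin a b <= t <= Rmax a b -> F t = G t) ->
  CInt F a b = CInt G a b.
Proof.
  intros HF H.
  assert (HG : cok G a b).
  { destruct HF as [H1 H2]; split.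
    - apply (ex_RInt_ext (fun t => CRe (F t))); auto. intros; rewrite H; auto; lra.
    - apply (ex_RInt_ext (fun t => CIm (F t))); auto. intros; rewrite H; auto; lra. }
  rewrite !CInt_eq by auto. apply Ceq; simpl; apply RInt_ext; intros; rewrite H; auto; lra.
Qed.

Definition ccont (F : R -> Cplx) x :=
  continuous (fun t => CRe (F t)) x /\ continuous (fun t => CIm (F t)) x.

Lemma cok_cont F a b : (forall x, ccont F x) -> cok F a b.
Proof. intros H; split; apply (ex_RInt_continuous (V:=R_CompleteNormedModule)); intros; apply H. Qed.

Definition c2 (F : R -> R -> Cplx) x y :=
  continuity_2d_pt (fun u v => CRe (F u v)) x y /\ continuity_2d_pt (fun u v => CIm (F u v)) x y.

Lemma c2_const c x y : c2 (fun _ _ => c) x y.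
Proof. split; apply continuity_2d_pt_const. Qed.
Lemma c2_add F G x y : c2 F x y -> c2 G x y -> c2 (fun u v => Cadd (F u v) (G u v)) x y.
Proof. intros [] []; split; simpl; apply continuity_2d_pt_plus; auto. Qed.
Lemma c2_sub F G x y : c2 F x y -> c2 G x y -> c2 (fun u v => Csub (F u v) (G u v)) x y.
Proof. intros [] []; split; simpl; apply continuity_2d_pt_minus; auto. Qed.
Lemma c2_mul F G x y : c2 F x y -> c2 G x y -> c2 (fun u v => Cmul (F u v) (G u v)) x y.
Proof.
  intros [] []; split; simpl.
  - apply continuity_2d_pt_minus; apply continuity_2d_pt_mult; auto.
  - apply continuity_2d_pt_plus; apply continuity_2d_pt_mult; auto.
Qed.
Lemma c2_conj F x y : c2 F x y -> c2 (fun u v => Cconj (F u v)) x y.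
Proof. intros []; split; simpl; auto. apply continuity_2d_pt_opp; auto. Qed.
Lemma c2_scale r F x y : c2 F x y -> c2 (fun u v => Cscale r (F u v)) x y.
Proof. intros []; split; simpl; apply continuity_2d_pt_mult; auto; apply continuity_2d_pt_const. Qed.
Lemma c2_scalef (r : R -> R -> R) F x y : continuity_2d_pt r x y -> c2 F x y -> c2 (fun u v => Cscale (r u v) (F u v)) x y.
Proof. intros ? []; split; simpl; apply continuity_2d_pt_mult; auto. Qed.
Lemma c2_pow F x y a : c2 F x y -> c2 (fun u v => Cpow (F u v) a) x y.
Proof. intros H; induction a; simpl. - apply c2_const. - apply c2_mul; auto. Qed.
Lemma c2_csum N F x y : (forall i, (i <= N)%nat -> c2 (F i) x y) -> c2 (fun u v => csum N (fun i => F i u v)) x y.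
Proof.
  induction N; intros H; simpl. - apply H; lia.
  - apply c2_add. + apply IHN; intros; apply H; lia. + apply H; lia.
Qed.
Lemma c2_norm2 F x y : c2 F x y -> continuity_2d_pt (fun u v => Cnorm2 (F u v)) x y.
Proof. intros []; unfold Cnorm2; apply continuity_2d_pt_plus; apply continuity_2d_pt_mult; auto. Qed.
Lemma c2_inv F x y : c2 F x y -> Cnorm2 (F x y) <> 0 -> c2 (fun u v => Cinv (F u v)) x y.
Proof.
  intros H Hn. assert (Hc := c2_norm2 F x y H). destruct H as [H1 H2]. unfold Cinv; split; simpl; unfold Rdiv.
  - apply continuity_2d_pt_mult; auto. apply continuity_2d_pt_inv; auto.
  - apply continuity_2d_pt_mult; auto. apply continuity_2d_pt_opp; auto. apply continuity_2d_pt_inv; auto.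
Qed.
Lemma c2_invnorm F x y : c2 F x y -> Cnorm2 (F x y) <> 0 -> continuity_2d_pt (fun u v => / Cnorm2 (F u v)) x y.
Proof. intros H Hn. apply continuity_2d_pt_inv; auto. apply c2_norm2; auto. Qed.

Lemma cont2_cos1 x y : continuity_2d_pt (fun u _ => cos u) x y.
Proof. apply (continuity_1d_2d_pt_comp cos (fun u _ => u)). apply continuity_cos. apply continuity_2d_pt_id1. Qed.
Lemma cont2_sin1 x y : continuity_2d_pt (fun u _ => sin u) x y.
Proof. apply (continuity_1d_2d_pt_comp sin (fun u _ => u)). apply continuity_sin. apply continuity_2d_pt_id1. Qed.
Lemma cont2_cos2 x y : continuity_2d_pt (fun _ v => cos v) x y.
Proof. apply (continuity_1d_2d_pt_comp cos (fun _ v => v)). apply continuity_cos. apply continuity_2d_pt_id2. Qed.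
Lemma cont2_sin2 x y : continuity_2d_pt (fun _ v => sin v) x y.
Proof. apply (continuity_1d_2d_pt_comp sin (fun _ v => v)). apply continuity_sin. apply continuity_2d_pt_id2. Qed.
Lemma c2_expi1 x y : c2 (fun u _ => Cexpi u) x y.
Proof. split; simpl. apply cont2_cos1. apply cont2_sin1. Qed.
Lemma c2_expi2 x y : c2 (fun _ v => Cexpi v) x y.
Proof. split; simpl. apply cont2_cos2. apply cont2_sin2. Qed.

Lemma cont2_snd f x y : continuity_2d_pt f x y -> continuous (fun v => f x v) y.
Proof.
  intros H P [eps HP].
  destruct (H eps) as [d Hd]. exists d. intros v Hv. apply HP. apply Hd.
  - rewrite Rminus_eq_0, Rabs_R0. apply cond_pos.
  - exact Hv.
Qed.
Lemma cont2_fst f x y : continuity_2d_pt f x y -> continuous (fun u => f u y) x.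
Proof.
  intros H P [eps HP].
  destruct (H eps) as [d Hd]. exists d. intros v Hv. apply HP. apply Hd.
  - exact Hv.
  - rewrite Rminus_eq_0, Rabs_R0. apply cond_pos.
Qed.

Lemma ball_R (x y e : R) : Rabs (y - x) < e -> ball x e y.
Proof. intros H. exact H. Qed.

Lemma param_cont (f : R -> R -> R) a b t0 : a <= b ->
  (forall s, a <= s <= b -> continuity_2d_pt f t0 s) ->
  (forall t s, continuous (fun v => f t v) s) ->
  continuous (fun t => CRI (f t) a b) t0.
Proof.
  intros Hab Hc Hs P [eps HP].
  assert (He : 0 < eps / (b - a + 1)) by (apply Rdiv_lt_0_compat; [apply cond_pos| lra]).
  destruct (uniform_continuity_2d_1d' f a b t0 Hc (mkposreal _ He)) as [d Hd].
  exists d. intros t Ht. apply HP. apply ball_R.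
  assert (Hex : forall t, ex_RInt (f t) a b).
  { intros t'. apply (ex_RInt_continuous (V:=R_CompleteNormedModule)). intros; apply Hs. }
  change (Rabs (minus (CRI (f t) a b) (CRI (f t0) a b)) < eps).
  rewrite <- (RInt_minus (V:=R_CompleteNormedModule)) by auto.
  eapply Rle_lt_trans.
  - apply abs_RInt_le_const with (M := eps / (b - a + 1)); auto.
    + apply (ex_RInt_minus (V:=R_NormedModule)); auto.
    + intros s Hs'. left. change (Rabs (f t s - f t0 s) < eps / (b - a + 1)).
      assert (Hts : Rabs (t - t0) < d) by exact Ht.
      apply (Hd s t0 s t); auto.
      * destruct d; simpl; lra.
      * apply Rabs_def2 in Hts; lra.
      * rewrite Rminus_eq_0, Rabs_R0; apply cond_pos.
  - assert (0 < eps) by apply cond_pos.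
    apply Rmult_lt_reg_r with (b - a + 1); [lra|].
    unfold Rdiv. rewrite Rmult_assoc, (Rmult_assoc eps), Rinv_l by lra. nra.
Qed.

Lemma RInt_zero_pos (g : R -> R) a b : a < b -> (forall x, continuous g x) ->
  (forall x, a <= x <= b -> 0 <= g x) -> CRI g a b = 0 -> forall x, a <= x <= b -> g x = 0.
Proof.
  intros Hab Hc Hp H0 x0 Hx0.
  destruct (Req_dec (g x0) 0) as [|Hne]; auto. exfalso.
  assert (Hpos : 0 < g x0) by (specialize (Hp x0 Hx0); lra).
  assert (Hex : forall u v, ex_RInt g u v) by (intros; apply (ex_RInt_continuous (V:=R_CompleteNormedModule)); auto).
  assert (Hcx := Hc x0). apply continuity_pt_filterlim in Hcx.
  rewrite continuity_pt_locally in Hcx.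
  assert (Hh : 0 < g x0 / 2) by lra.
  destruct (Hcx (mkposreal _ Hh)) as [d Hd]. simpl in Hd.
  set (c := Rmax a (x0 - d / 2)). set (e := Rmin b (x0 + d / 2)).
  assert (Hd0 : 0 < d) by apply cond_pos.
  assert (Hc1 : a <= c) by apply Rmax_l.
  assert (He1 : e <= b) by apply Rmin_l.
  assert (Hce : c < e).
  { unfold c, e. apply Rmax_lub_lt; apply Rmin_glb_lt; lra. }
  assert (Hcx0 : x0 - d / 2 <= c) by apply Rmax_r.
  assert (Hex0 : e <= x0 + d / 2) by apply Rmin_r.
  assert (H1 : 0 <= CRI g a c) by (apply RInt_ge_0; auto; intros; apply Hp; lra).
  assert (H3 : 0 <= CRI g e b) by (apply RInt_ge_0; auto; intros; apply Hp; lra).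
  assert (H2 : 0 < CRI g c e).
  { apply RInt_gt_0; auto. intros x Hx.
    assert (Rabs (g x - g x0) < g x0 / 2) by (apply Hd; change (Rabs (x - x0) < d); apply Rabs_def1; lra).
    apply Rabs_def2 in H; lra. }
  rewrite <- (RInt_Chasles (V:=R_CompleteNormedModule) g a c b) in H0 by auto.
  rewrite <- (RInt_Chasles (V:=R_CompleteNormedModule) g c e b) in H0 by auto.
  change (CRI g a c + (CRI g c e + CRI g e b) = 0) in H0. lra.
Qed.

Definition TI (F : R -> R -> Cplx) : Cplx :=
  Cscale (/ (4 * PI ^ 2)) (CInt (fun t => CInt (fun s => F t s) (- PI) PI) (- PI) PI).

Lemma torus_int_TI F : torus_int F = TI (fun t s => F (Cexpi t) (Cexpi s)).
Proof. reflexivity. Qed.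

Definition C2 F := forall t s, c2 F t s.

Lemma C2_re_snd F t s : C2 F -> continuous (fun v => CRe (F t v)) s.
Proof. intros H. apply (cont2_snd (fun u v => CRe (F u v))). apply H. Qed.
Lemma C2_im_snd F t s : C2 F -> continuous (fun v => CIm (F t v)) s.
Proof. intros H. apply (cont2_snd (fun u v => CIm (F u v))). apply H. Qed.

Lemma C2_inner_cok F t a b : C2 F -> cok (F t) a b.
Proof. intros H. apply cok_cont. intros x; split; [apply C2_re_snd|apply C2_im_snd]; auto. Qed.

Lemma C2_outer_eq F a b : C2 F -> forall t, CInt (F t) a b =
   mkC (CRI (fun s => CRe (F t s)) a b) (CRI (fun s => CIm (F t s)) a b).
Proof. intros H t. apply CInt_eq. apply C2_inner_cok; auto. Qed.

Lemma C2_outer_cok F a b c d : a <= b -> C2 F -> cok (fun t => CInt (F t) a b) c d.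
Proof.
  intros Hab H. apply cok_cont. intros t.
  split.
  - apply (continuous_ext_loc _ (fun t => CRI (fun s => CRe (F t s)) a b)).
    + apply filter_forall; intros y; rewrite C2_outer_eq; auto.
    + apply (param_cont (fun u v => CRe (F u v))); auto; intros; try apply H. apply C2_re_snd; auto.
  - apply (continuous_ext_loc _ (fun t => CRI (fun s => CIm (F t s)) a b)).
    + apply filter_forall; intros y; rewrite C2_outer_eq; auto.
    + apply (param_cont (fun u v => CIm (F u v))); auto; intros; try apply H. apply C2_im_snd; auto.
Qed.

Lemma TI_add F G : C2 F -> C2 G -> TI (fun t s => Cadd (F t s) (G t s)) = Cadd (TI F) (TI G).
Proof.
  intros HF HG. unfold TI.
  rewrite (CInt_ext _ (fun t => Cadd (CInt (fun s => F t s) (-PI) PI) (CInt (fun s => G t s) (-PI) PI))).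
  2:{ intros t. apply CInt_add; apply C2_inner_cok; auto. }
  rewrite CInt_add by (apply C2_outer_cok; auto; pose proof PI_RGT_0; lra).
  cring.
Qed.

Lemma TI_sub F G : C2 F -> C2 G -> TI (fun t s => Csub (F t s) (G t s)) = Csub (TI F) (TI G).
Proof.
  intros HF HG. unfold TI.
  rewrite (CInt_ext _ (fun t => Csub (CInt (fun s => F t s) (-PI) PI) (CInt (fun s => G t s) (-PI) PI))).
  2:{ intros t. apply CInt_sub; apply C2_inner_cok; auto. }
  rewrite CInt_sub by (apply C2_outer_cok; auto; pose proof PI_RGT_0; lra).
  cring.
Qed.

Lemma TI_mulc c F : C2 F -> TI (fun t s => Cmul c (F t s)) = Cmul c (TI F).
Proof.
  intros HF. unfold TI.
  rewrite (CInt_ext _ (fun t => Cmul c (CInt (fun s => F t s) (-PI) PI))).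
  2:{ intros t. apply CInt_mulc; apply C2_inner_cok; auto. }
  rewrite CInt_mulc by (apply C2_outer_cok; auto; pose proof PI_RGT_0; lra).
  cring.
Qed.

Lemma C2_add F G : C2 F -> C2 G -> C2 (fun t s => Cadd (F t s) (G t s)).
Proof. intros ? ? ? ?; apply c2_add; auto. Qed.

Lemma TI_csum N F : (forall i, (i <= N)%nat -> C2 (F i)) ->
  TI (fun t s => csum N (fun i => F i t s)) = csum N (fun i => TI (F i)).
Proof.
  induction N; intros H; simpl. - reflexivity.
  - rewrite TI_add. + rewrite IHN; auto.
    + intros t s. apply c2_csum; intros; apply H; lia. + apply H; lia.
Qed.

Lemma TI_ext F G : (forall t s, F t s = G t s) -> TI F = TI G.
Proof.
  intros H. replace F with G; auto. apply functional_extensionality; intros t;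
  apply functional_extensionality; auto.
Qed.

Lemma TI_zero F : C2 F -> (forall t s, CIm (F t s) = 0 /\ 0 <= CRe (F t s)) -> CRe (TI F) = 0 ->
  forall t s, -PI <= t <= PI -> -PI <= s <= PI -> CRe (F t s) = 0.
Proof.
  intros HC Hp H0 t s Ht Hs.
  assert (HPI := PI_RGT_0).
  unfold TI in H0. simpl in H0.
  assert (Hout : CRI (fun t => CRI (fun s => CRe (F t s)) (-PI) PI) (-PI) PI = 0).
  { rewrite <- RInt_eq.
    - assert (E : (fun t => CRI (fun s => CRe (F t s)) (-PI) PI) = (fun t => CRe (CInt (fun s => F t s) (- PI) PI))).
      { apply functional_extensionality; intros x. rewrite C2_outer_eq; auto. }
      rewrite E.
      assert (/ (4 * PI ^ 2) <> 0) by (apply Rinv_neq_0_compat; nra).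
      apply Rmult_integral in H0; destruct H0; auto; contradiction.
    - apply (ex_RInt_continuous (V:=R_CompleteNormedModule)); intros.
      apply (param_cont (fun u v => CRe (F u v))); try lra; intros; try apply HC; apply C2_re_snd; auto. }
  assert (Hcont : forall x, continuous (fun t => CRI (fun s => CRe (F t s)) (-PI) PI) x).
  { intros; apply (param_cont (fun u v => CRe (F u v))); try lra; intros; try apply HC; apply C2_re_snd; auto. }
  assert (Hin := RInt_zero_pos _ (-PI) PI ltac:(lra) Hcont).
  assert (Hin2 : CRI (fun s => CRe (F t s)) (-PI) PI = 0).
  { apply Hin; auto. intros. apply RInt_ge_0; try lra.
    - apply (ex_RInt_continuous (V:=R_CompleteNormedModule)); intros; apply C2_re_snd; auto.
    - intros; apply Hp. }
  apply (RInt_zero_pos (fun s => CRe (F t s)) (-PI) PI ltac:(lra)); auto.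
  - intros; apply C2_re_snd; auto.
  - intros; apply Hp.
Qed.

Lemma Cexpi_add a b : Cmul (Cexpi a) (Cexpi b) = Cexpi (a + b).
Proof. apply Ceq; unfold Cexpi, Cmul; simpl; rewrite ?cos_plus, ?sin_plus; ring. Qed.
Lemma Cconj_expi t : Cconj (Cexpi t) = Cexpi (- t).
Proof. apply Ceq; unfold Cexpi, Cconj; simpl; rewrite ?cos_neg, ?sin_neg; ring. Qed.
Lemma Cnorm2_expi t : Cnorm2 (Cexpi t) = 1.
Proof. unfold Cnorm2, Cexpi; simpl. rewrite <- (sin2_cos2 t). unfold Rsqr. ring. Qed.
Lemma Cpow_expi t a : Cpow (Cexpi t) a = Cexpi (INR a * t).
Proof.
  induction a; cbn [Cpow].
  - apply Ceq; unfold Cexpi, C1; simpl; rewrite Rmult_0_l; [rewrite cos_0|rewrite sin_0]; auto.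
  - rewrite IHa, Cexpi_add. f_equal. rewrite S_INR. ring.
Qed.
Lemma Cexpi_conj_mul t : Cmul (Cexpi t) (Cconj (Cexpi t)) = C1.
Proof. rewrite Cconj_expi, Cexpi_add, Rplus_opp_r. apply Ceq; unfold Cexpi, C1; simpl; [apply cos_0|apply sin_0]. Qed.

Lemma sin_IZR_PI r : sin (IZR r * PI) = 0.
Proof. apply sin_eq_0_1. eauto. Qed.

Lemma ccont_expi r x : ccont (fun t => Cexpi (r * t)) x.
Proof.
  split; simpl; apply continuity_pt_filterlim.
  - apply (continuity_pt_comp (fun t => r * t) cos). apply continuity_pt_mult; [apply continuity_pt_const; intros ? ?; auto | apply continuity_pt_id]. apply continuity_cos.
  - apply (continuity_pt_comp (fun t => r * t) sin). apply continuity_pt_mult; [apply continuity_pt_const; intros ? ?; auto | apply continuity_pt_id]. apply continuity_sin.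
Qed.

Lemma CInt_expi r : CInt (fun t => Cexpi (IZR r * t)) (-PI) PI =
  if Z.eqb r 0 then mkC (2 * PI) 0 else C0.
Proof.
  rewrite CInt_eq by (apply cok_cont; intros; apply ccont_expi).
  destruct (Z.eqb_spec r 0) as [->|Hr].
  - apply Ceq; simpl.
    + rewrite (RInt_ext _ (fun _ => 1)) by (intros; rewrite Rmult_0_l; apply cos_0).
      rewrite RInt_const. change (scal (PI - - PI) 1) with ((PI - - PI) * 1). ring.
    + rewrite (RInt_ext _ (fun _ => 0)) by (intros; rewrite Rmult_0_l; apply sin_0).
      rewrite RInt_const. change (scal (PI - - PI) 0) with ((PI - - PI) * 0). ring.
  - assert (Hr' : IZR r <> 0) by (apply not_0_IZR; auto).
    apply Ceq; simpl.
    + assert (H := is_RInt_derive (V:=R_CompleteNormedModule) (fun t => sin (IZR r * t) / IZR r) (fun t => cos (IZR r * t)) (-PI) PI).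
      assert (H' : is_RInt (fun t : R => cos (IZR r * t)) (- PI) PI
         (minus ((fun t : R => sin (IZR r * t) / IZR r) PI) ((fun t : R => sin (IZR r * t) / IZR r) (- PI)))).
      2:{ rewrite (is_RInt_unique _ _ _ _ H').
          change (minus ?a ?b) with (a - b). cbv beta. rewrite Ropp_mult_distr_r_reverse, sin_neg, sin_IZR_PI. field; auto. }
      apply H.
      * intros. auto_derive; auto. field; auto.
      * intros. apply continuity_pt_filterlim. apply (continuity_pt_comp (fun t => IZR r * t) cos).
        apply continuity_pt_mult; [apply continuity_pt_const; intros ? ?; auto | apply continuity_pt_id]. apply continuity_cos.
    + assert (H := is_RInt_derive (V:=R_CompleteNormedModule) (fun t => - cos (IZR r * t) / IZR r) (fun t => sin (IZR r * t)) (-PI) PI).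
      assert (H' : is_RInt (fun t : R => sin (IZR r * t)) (- PI) PI
         (minus ((fun t : R => - cos (IZR r * t) / IZR r) PI) ((fun t : R => - cos (IZR r * t) / IZR r) (- PI)))).
      2:{ rewrite (is_RInt_unique _ _ _ _ H').
          change (minus ?a ?b) with (a - b). cbv beta. rewrite Ropp_mult_distr_r_reverse, cos_neg. field; auto. }
      apply H.
      * intros. auto_derive; auto. field; auto.
      * intros. apply continuity_pt_filterlim. apply (continuity_pt_comp (fun t => IZR r * t) sin).
        apply continuity_pt_mult; [apply continuity_pt_const; intros ? ?; auto | apply continuity_pt_id]. apply continuity_sin.
Qed.

Lemma mono_prod t a b : Cmul (Cpow (Cexpi t) a) (Cconj (Cpow (Cexpi t) b)) =
  Cexpi (IZR (Z.of_nat a - Z.of_nat b) * t).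
Proof.
  rewrite !Cpow_expi, Cconj_expi, Cexpi_add. f_equal.
  rewrite minus_IZR, <- !INR_IZR_INZ. ring.
Qed.

Lemma CInt_mono a b : CInt (fun t => Cmul (Cpow (Cexpi t) a) (Cconj (Cpow (Cexpi t) b))) (-PI) PI =
  if Nat.eqb a b then mkC (2 * PI) 0 else C0.
Proof.
  rewrite (CInt_ext _ (fun t => Cexpi (IZR (Z.of_nat a - Z.of_nat b) * t))) by (intros; apply mono_prod).
  rewrite CInt_expi.
  destruct (Nat.eqb_spec a b), (Z.eqb_spec (Z.of_nat a - Z.of_nat b) 0); auto; lia.
Qed.

Lemma idR_plus (f g : R -> R) (x df dg : R) : is_derive f x df -> is_derive g x dg -> is_derive (fun t => f t + g t) x (df + dg).
Proof. intros; apply (is_derive_plus (K:=R_AbsRing) (V:=R_NormedModule)); auto. Qed.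
Lemma idR_minus (f g : R -> R) (x df dg : R) : is_derive f x df -> is_derive g x dg -> is_derive (fun t => f t - g t) x (df - dg).
Proof. intros; apply (is_derive_minus (K:=R_AbsRing) (V:=R_NormedModule)); auto. Qed.
Lemma idR_opp (f : R -> R) (x df : R) : is_derive f x df -> is_derive (fun t => - f t) x (- df).
Proof. intros; apply (is_derive_opp (K:=R_AbsRing) (V:=R_NormedModule)); auto. Qed.
Lemma idR_const (a x : R) : is_derive (fun _ => a) x 0.
Proof. apply (is_derive_const (K:=R_AbsRing) (V:=R_NormedModule)). Qed.
Lemma idR_eq (f : R -> R) (x d d' : R) : is_derive f x d -> d = d' -> is_derive f x d'.
Proof. intros H ->; auto. Qed.

Definition cder (f : R -> Cplx) (x : R) (d : Cplx) :=
  is_derive (fun t => CRe (f t)) x (CRe d) /\ is_derive (fun t => CIm (f t)) x (CIm d).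

Lemma cder_eq f x d d' : cder f x d -> d = d' -> cder f x d'.
Proof. intros H ->; auto. Qed.
Lemma cder_const c x : cder (fun _ => c) x C0.
Proof. split; apply idR_const. Qed.
Lemma cder_add f g x df dg : cder f x df -> cder g x dg -> cder (fun t => Cadd (f t) (g t)) x (Cadd df dg).
Proof. intros [] []; split; simpl; apply idR_plus; auto. Qed.
Lemma cder_sub f g x df dg : cder f x df -> cder g x dg -> cder (fun t => Csub (f t) (g t)) x (Csub df dg).
Proof. intros [] []; split; simpl; apply idR_minus; auto. Qed.
Lemma cder_mul f g x df dg : cder f x df -> cder g x dg ->
  cder (fun t => Cmul (f t) (g t)) x (Cadd (Cmul df (g x)) (Cmul (f x) dg)).
Proof.
  intros [H1 H2] [H3 H4]; split; simpl.
  - eapply idR_eq. apply idR_minus; apply is_derive_mult; eauto. simpl; ring.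
  - eapply idR_eq. apply idR_plus; apply is_derive_mult; eauto. simpl; ring.
Qed.
Lemma cder_inv f x df : cder f x df -> Cnorm2 (f x) <> 0 ->
  cder (fun t => Cinv (f t)) x (Csub C0 (Cmul df (Cinv (Cmul (f x) (f x))))).
Proof.
  intros [H1 H2] Hn.
  assert (Hd : is_derive (fun t => Cnorm2 (f t)) x (2 * (CRe (f x) * CRe df + CIm (f x) * CIm df))).
  { unfold Cnorm2. eapply idR_eq. apply idR_plus; apply is_derive_mult; eauto. cbv beta. ring. }
  assert (Hn' : forall a b : R, a * a + b * b <> 0 ->
     (a * a - b * b) * (a * a - b * b) + (a * b + b * a) * (a * b + b * a) <> 0 /\ a * a + b * b <> 0).
  { intros a b Hab. split; auto. replace ((a * a - b * b) * (a * a - b * b) + (a * b + b * a) * (a * b + b * a))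
      with ((a * a + b * b) * (a * a + b * b)) by ring. intro E; apply Rmult_integral in E; tauto. }
  unfold Cinv at 1; split; cbn [CRe CIm].
  - eapply idR_eq. { apply is_derive_div; [exact H1|exact Hd|exact Hn]. }
    unfold Cinv, Csub, Cmul, C0; cbn [CRe CIm].
    unfold Cnorm2 in *; cbn [CRe CIm].
    set (a := CRe (f x)) in *; set (b := CIm (f x)) in *; set (c := CRe df); set (d := CIm df).
    field. auto.
  - eapply idR_eq. { apply is_derive_div; [apply idR_opp; exact H2|exact Hd|exact Hn]. }
    unfold Cinv, Csub, Cmul, C0; cbn [CRe CIm].
    unfold Cnorm2 in *; cbn [CRe CIm].
    set (a := CRe (f x)) in *; set (b := CIm (f x)) in *; set (c := CRe df); set (d := CIm df).
    field. auto.
Qed.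

Lemma cder_pow f x df j : cder f x df ->
  cder (fun t => Cpow (f t) j) x (Cmul (Cscale (INR j) (Cpow (f x) (j - 1))) df).
Proof.
  intros H. induction j.
  - apply (cder_eq _ _ C0). exact (cder_const C1 x). change (INR 0) with 0. cring.
  - apply (cder_eq _ _ _ _ (cder_mul _ _ _ _ _ H IHj)).
    destruct j.
    + change (INR 1) with 1. change (INR 0) with 0. cbn [Cpow Nat.sub]. cring.
    + replace (S (S j) - 1)%nat with (S j) by lia. replace (S j - 1)%nat with j by lia.
      change (Cpow (f x) (S j)) with (Cmul (f x) (Cpow (f x) j)).
      rewrite (S_INR (S j)).
      set (P := Cpow (f x) j). set (r := INR (S j)). cring.
Qed.
Lemma cder_csum N F x dF : (forall i, (i <= N)%nat -> cder (F i) x (dF i)) ->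
  cder (fun t => csum N (fun i => F i t)) x (csum N dF).
Proof.
  induction N; intros H; simpl. - apply H; lia.
  - apply cder_add. + apply IHN; intros; apply H; lia. + apply H; lia.
Qed.

Definition qp (c : nat -> Cplx) m x := csum m (fun j => Cmul (c j) (Cpow x j)).
Definition qd (c : nat -> Cplx) m x := csum m (fun j => Cmul (c j) (Cscale (INR j) (Cpow x (j - 1)))).
Definition hf r c m x := Cmul (Cpow x r) (Cinv (qp c m x)).
Definition Hd r c m x :=
  Cadd (Cmul (Cscale (INR r) (Cpow x (r - 1))) (Cinv (qp c m x)))
       (Cmul (Cpow x r) (Csub C0 (Cmul (qd c m x) (Cinv (Cmul (qp c m x) (qp c m x)))))).

Lemma cder_qp c m f x df : cder f x df -> cder (fun t => qp c m (f t)) x (Cmul (qd c m (f x)) df).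
Proof.
  intros H. unfold qp.
  apply (cder_eq _ _ _ _ (cder_csum m (fun j t => Cmul (c j) (Cpow (f t) j)) x
     (fun j => Cadd (Cmul C0 (Cpow (f x) j)) (Cmul (c j) (Cmul (Cscale (INR j) (Cpow (f x) (j - 1))) df))) 
     (fun j _ => cder_mul _ _ _ _ _ (cder_const (c j) x) (cder_pow f x df j H)))).
  unfold qd. rewrite csum_mul_r. apply csum_ext. intros. cring.
Qed.

Lemma cder_hf r c m f x df : cder f x df -> Cnorm2 (qp c m (f x)) <> 0 ->
  cder (fun t => hf r c m (f t)) x (Cmul (Hd r c m (f x)) df).
Proof.
  intros H Hn. unfold hf.
  apply (cder_eq _ _ _ _ (cder_mul _ _ _ _ _ (cder_pow f x df r H)
     (cder_inv _ _ _ (cder_qp c m f x df H) Hn))).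
  unfold Hd. set (A := Cinv (qp c m (f x))). set (B := Cinv (Cmul (qp c m (f x)) (qp c m (f x)))).
  set (Q := qd c m (f x)). set (P1 := Cpow (f x) (r - 1)). set (P2 := Cpow (f x) r). cring.
Qed.

Definition Xp (u v : R) := mkC (u * cos v) (u * sin v).

Lemma cder_Xp_u u v : cder (fun t => Xp t v) u (Cexpi v).
Proof. split; simpl; auto_derive; auto; ring. Qed.
Lemma cder_Xp_v u v : cder (fun t => Xp u t) v (Cmul (mkC 0 u) (Cexpi v)).
Proof. split; simpl; auto_derive; auto; ring. Qed.

Lemma Cnorm2_Xp u v : Cnorm2 (Xp u v) = u * u.
Proof. unfold Cnorm2, Xp; simpl. rewrite <- (Rmult_1_r (u * u)), <- (sin2_cos2 v). unfold Rsqr. ring. Qed.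

Lemma c2_Xp (g : R -> R -> R) x y : continuity_2d_pt g x y -> c2 (fun u v => Xp (g u v) v) x y.
Proof. intros H; split; simpl; apply continuity_2d_pt_mult; auto. apply cont2_cos2. apply cont2_sin2. Qed.

Lemma c2_qp c m F x y : c2 F x y -> c2 (fun u v => qp c m (F u v)) x y.
Proof. intros H. unfold qp. apply c2_csum. intros. apply c2_mul. apply c2_const. apply c2_pow; auto. Qed.
Lemma c2_qd c m F x y : c2 F x y -> c2 (fun u v => qd c m (F u v)) x y.
Proof. intros H. unfold qd. apply c2_csum. intros. apply c2_mul. apply c2_const. apply c2_scale, c2_pow; auto. Qed.
Lemma c2_hf r c m F x y : c2 F x y -> Cnorm2 (qp c m (F x y)) <> 0 -> c2 (fun u v => hf r c m (F u v)) x y.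
Proof. intros H Hn. unfold hf. apply c2_mul. apply c2_pow; auto. apply (c2_inv (fun u v => qp c m (F u v))); auto. apply c2_qp; auto. Qed.
Lemma Cnorm2_mul a b : Cnorm2 (Cmul a b) = Cnorm2 a * Cnorm2 b.
Proof. unfold Cnorm2, Cmul; simpl; ring. Qed.
Lemma c2_Hd r c m F x y : c2 F x y -> Cnorm2 (qp c m (F x y)) <> 0 -> c2 (fun u v => Hd r c m (F u v)) x y.
Proof.
  intros H Hn. unfold Hd. apply c2_add; apply c2_mul.
  - apply c2_scale, c2_pow; auto.
  - apply (c2_inv (fun u v => qp c m (F u v))); auto. apply c2_qp; auto.
  - apply c2_pow; auto.
  - apply c2_sub. apply c2_const. apply c2_mul. apply c2_qd; auto.
    apply (c2_inv (fun u v => Cmul (qp c m (F u v)) (qp c m (F u v)))).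
    apply c2_mul; apply c2_qp; auto. rewrite Cnorm2_mul. intro E; apply Rmult_integral in E; tauto.
Qed.

Lemma deriv_param0 (f df : R -> R -> R) (r0 a b d : R) : 0 < d ->
  (forall u v, Rabs (u - r0) < d -> is_derive (fun u => f u v) u (df u v)) ->
  (forall v, continuity_2d_pt df r0 v) ->
  (forall u v, continuous (fun v => f u v) v) ->
  is_derive (fun u => CRI (f u) a b) r0 (CRI (df r0) a b).
Proof.
  intros Hd Hder Hc Hcf.
  assert (E : CRI (df r0) a b = CRI (fun t => Derive (fun u => f u t) r0) a b).
  { apply RInt_ext. intros. symmetry. apply is_derive_unique. apply Hder. rewrite Rminus_eq_0, Rabs_R0; auto. }
  rewrite E. apply (is_derive_RInt_param f a b r0).
  - exists (mkposreal d Hd). intros y Hy t _. exists (df y t). apply Hder. exact Hy.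
  - intros t _. apply (continuity_2d_pt_ext_loc df). 2: apply Hc.
    exists (mkposreal d Hd). intros u v Hu _. symmetry. apply is_derive_unique. apply Hder. exact Hu.
  - apply filter_forall. intros y. apply (ex_RInt_continuous (V:=R_CompleteNormedModule)). intros; apply Hcf.
Qed.

Definition clamp (u : R) := let w := (1 + u - Rabs (1 - u)) / 2 in (w + Rabs w) / 2.

Lemma clamp_range u : 0 <= clamp u <= 1.
Proof. unfold clamp; cbv zeta. set (w := (1 + u - Rabs (1 - u)) / 2).
  assert (Hw : w <= 1) by (unfold w; destruct (Rle_dec u 1); [rewrite (Rabs_pos_eq (1-u)) by lra | rewrite (Rabs_left (1-u)) by lra]; lra).
  destruct (Rle_dec 0 w); [rewrite (Rabs_pos_eq w) by lra | rewrite (Rabs_left w) by lra]; lra. Qed.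
Lemma clamp_id u : 0 <= u <= 1 -> clamp u = u.
Proof. intros H. unfold clamp; cbv zeta. rewrite (Rabs_pos_eq (1 - u)) by lra.
  rewrite Rabs_pos_eq by lra. field. Qed.
Lemma clamp_cont u : continuity_pt clamp u.
Proof.
  unfold clamp. apply continuity_pt_mult; [|apply continuity_pt_const; intros ? ?; auto].
  assert (Hw : continuity_pt (fun u => (1 + u - Rabs (1 - u)) / 2) u).
  { apply continuity_pt_mult; [|apply continuity_pt_const; intros ? ?; auto].
    apply continuity_pt_minus. apply continuity_pt_plus. apply continuity_pt_const; intros ? ?; auto. apply continuity_pt_id.
    apply (continuity_pt_comp (fun u => 1 - u) Rabs). apply continuity_pt_minus. apply continuity_pt_const; intros ? ?; auto. apply continuity_pt_id.
    apply Rcontinuity_abs. }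
  apply continuity_pt_plus; auto. apply (continuity_pt_comp (fun u => (1 + u - Rabs (1 - u)) / 2) Rabs); auto. apply Rcontinuity_abs.
Qed.

Lemma Xp_PI u : Xp u PI = Xp u (- PI).
Proof. unfold Xp. rewrite cos_neg, sin_neg, sin_PI. f_equal; ring. Qed.

Lemma Dtheta_int r c m (rho : R) (pr : Cplx -> R) :
  (pr = CRe \/ pr = CIm) -> 0 < rho < 1 ->
  (forall x, Cnorm2 x <= 1 -> Cnorm2 (qp c m x) <> 0) ->
  CRI (fun v => pr (Cmul (Hd r c m (Xp rho v)) (Cmul (mkC 0 rho) (Cexpi v)))) (-PI) PI = 0.
Proof.
  intros Hpr Hr Hst.
  assert (Hn : forall v, Cnorm2 (qp c m (Xp rho v)) <> 0).
  { intros v. apply Hst. rewrite Cnorm2_Xp. nra. }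
  assert (Hc2 : forall u v, c2 (fun _ v => Cmul (Hd r c m (Xp rho v)) (Cmul (mkC 0 rho) (Cexpi v))) u v).
  { intros u v. apply c2_mul. apply (c2_Hd r c m (fun _ v => Xp rho v)). apply (c2_Xp (fun _ _ => rho)).
    apply continuity_2d_pt_const. apply Hn. apply c2_mul. apply c2_const. apply c2_expi2. }
  assert (H := is_RInt_derive (V:=R_CompleteNormedModule) (fun v => pr (hf r c m (Xp rho v)))
     (fun v => pr (Cmul (Hd r c m (Xp rho v)) (Cmul (mkC 0 rho) (Cexpi v)))) (-PI) PI).
  assert (H' : is_RInt (fun v => pr (Cmul (Hd r c m (Xp rho v)) (Cmul (mkC 0 rho) (Cexpi v)))) (-PI) PI
     (minus (pr (hf r c m (Xp rho PI))) (pr (hf r c m (Xp rho (-PI)))))).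
  { apply H.
    - intros v _. pose proof (cder_hf r c m (fun t => Xp rho t) v (Cmul (mkC 0 rho) (Cexpi v)) (cder_Xp_v rho v) (Hn v)) as [D1 D2].
      destruct Hpr as [-> | ->]; auto.
    - intros v _. destruct (Hc2 0 v). destruct Hpr as [-> | ->].
      + apply (cont2_snd (fun u v => CRe (Cmul (Hd r c m (Xp rho v)) (Cmul (mkC 0 rho) (Cexpi v)))) 0). auto.
      + apply (cont2_snd (fun u v => CIm (Cmul (Hd r c m (Xp rho v)) (Cmul (mkC 0 rho) (Cexpi v)))) 0). auto. }
  rewrite (is_RInt_unique _ _ _ _ H'). rewrite Xp_PI. unfold minus, plus, opp; simpl. ring.
Qed.

Lemma Dth_c2 r c m rho u v : 0 < rho < 1 ->
  (forall x, Cnorm2 x <= 1 -> Cnorm2 (qp c m x) <> 0) ->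
  c2 (fun _ v => Cmul (Hd r c m (Xp rho v)) (Cmul (mkC 0 rho) (Cexpi v))) u v.
Proof.
  intros Hr Hst. apply c2_mul. apply (c2_Hd r c m (fun _ v => Xp rho v)). apply (c2_Xp (fun _ _ => rho)).
  apply continuity_2d_pt_const. apply Hst. rewrite Cnorm2_Xp; nra. apply c2_mul. apply c2_const. apply c2_expi2.
Qed.

Lemma mean_zero_pr r c m (pr : Cplx -> R) : (pr = CRe \/ pr = CIm) -> (1 <= r)%nat ->
  (forall x, Cnorm2 x <= 1 -> Cnorm2 (qp c m x) <> 0) ->
  CRI (fun v => pr (hf r c m (Xp 1 v))) (-PI) PI = 0.
Proof.
  intros Hpr Hr Hst.
  set (Phi := fun u v => hf r c m (Xp (clamp u) v)).
  assert (HC : C2 Phi).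
  { intros u v. apply (c2_hf r c m (fun u v => Xp (clamp u) v)).
    - apply (c2_Xp (fun u _ => clamp u)). apply (continuity_1d_2d_pt_comp clamp (fun u _ => u)).
      apply clamp_cont. apply continuity_2d_pt_id1.
    - apply Hst. rewrite Cnorm2_Xp. pose proof (clamp_range u). nra. }
  assert (HCpr : forall u v, continuity_2d_pt (fun u v => pr (Phi u v)) u v).
  { intros u v. destruct (HC u v); destruct Hpr as [-> | ->]; auto. }
  set (G := fun u => CRI (fun v => pr (Phi u v)) (-PI) PI).
  assert (HGc : forall u, continuity_pt G u).
  { intros u. apply continuity_pt_filterlim. apply (param_cont (fun u v => pr (Phi u v))).
    pose proof PI_RGT_0; lra. intros; apply HCpr. intros; apply (cont2_snd (fun u v => pr (Phi u v))); apply HCpr. }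
  assert (HGd : forall u, 0 < u < 1 -> is_derive G u 0).
  { intros u Hu.
    assert (Hd0 : 0 < Rmin u (1 - u)) by (apply Rmin_glb_lt; lra).
    assert (Hder : forall u' v, Rabs (u' - u) < Rmin u (1 - u) ->
      is_derive (fun u => pr (Phi u v)) u' (pr (Cmul (Hd r c m (Xp u' v)) (Cexpi v)))).
    { intros u' v Hu'.
      assert (Hu'1 : 0 < u' < 1).
      { apply Rabs_def2 in Hu'. pose proof (Rmin_l u (1 - u)). pose proof (Rmin_r u (1 - u)). lra. }
      pose proof (cder_hf r c m (fun t => Xp t v) u' (Cexpi v) (cder_Xp_u u' v)) as HH.
      assert (Hn : Cnorm2 (qp c m (Xp u' v)) <> 0) by (apply Hst; rewrite Cnorm2_Xp; nra).
      destruct (HH Hn) as [D1 D2].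
      assert (Hloc : locally u' (fun t => pr (hf r c m (Xp t v)) = pr (Phi t v))).
      { assert (He : 0 < Rmin u' (1 - u')) by (apply Rmin_glb_lt; lra).
        exists (mkposreal _ He). intros y Hy. change (Rabs (y - u') < Rmin u' (1 - u')) in Hy.
        apply Rabs_def2 in Hy. pose proof (Rmin_l u' (1 - u')). pose proof (Rmin_r u' (1 - u')).
        unfold Phi. rewrite clamp_id by lra. reflexivity. }
      apply (is_derive_ext_loc (fun t => pr (hf r c m (Xp t v)))); auto.
      destruct Hpr as [-> | ->]; auto. }
    assert (HD := deriv_param0 (fun u v => pr (Phi u v)) (fun u v => pr (Cmul (Hd r c m (Xp u v)) (Cexpi v)))
       u (-PI) PI (Rmin u (1 - u)) Hd0 Hder).
    assert (Hc2 : forall v, c2 (fun u v => Cmul (Hd r c m (Xp u v)) (Cexpi v)) u v).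
    { intros v. apply c2_mul. apply (c2_Hd r c m (fun u v => Xp u v)). apply (c2_Xp (fun u _ => u)).
      apply continuity_2d_pt_id1. apply Hst. rewrite Cnorm2_Xp; nra. apply c2_expi2. }
    eapply idR_eq. apply HD.
    - intros v. destruct (Hc2 v). destruct Hpr as [-> | ->]; auto.
    - intros; apply (cont2_snd (fun u v => pr (Phi u v))); apply HCpr.
    - destruct Hpr as [-> | ->].
      + rewrite (RInt_ext _ (fun v => / u * CIm (Cmul (Hd r c m (Xp u v)) (Cmul (mkC 0 u) (Cexpi v))))).
        * rewrite (RInt_scal (V:=R_CompleteNormedModule) (fun v => CIm (Cmul (Hd r c m (Xp u v)) (Cmul (mkC 0 u) (Cexpi v))))).
          -- change (scal ?a ?b) with (a * b). rewrite (Dtheta_int r c m u CIm); auto. ring.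
          -- apply (ex_RInt_continuous (V:=R_CompleteNormedModule)). intros.
             destruct (Dth_c2 r c m u 0 z Hu Hst) as [_ B]. exact (cont2_snd (fun _ v => CIm (Cmul (Hd r c m (Xp u v)) (Cmul (mkC 0 u) (Cexpi v)))) 0 z B).
        * intros. cbn [CRe CIm Cmul]. match goal with |- ?a = ?b => change (@eq R a b) end. field. lra.
      + rewrite (RInt_ext _ (fun v => - / u * CRe (Cmul (Hd r c m (Xp u v)) (Cmul (mkC 0 u) (Cexpi v))))).
        * rewrite (RInt_scal (V:=R_CompleteNormedModule) (fun v => CRe (Cmul (Hd r c m (Xp u v)) (Cmul (mkC 0 u) (Cexpi v))))).
          -- change (scal ?a ?b) with (a * b). rewrite (Dtheta_int r c m u CRe); auto. ring.
          -- apply (ex_RInt_continuous (V:=R_CompleteNormedModule)). intros.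
             destruct (Dth_c2 r c m u 0 z Hu Hst) as [B _]. exact (cont2_snd (fun _ v => CRe (Cmul (Hd r c m (Xp u v)) (Cmul (mkC 0 u) (Cexpi v)))) 0 z B).
        * intros. cbn [CRe CIm Cmul]. match goal with |- ?a = ?b => change (@eq R a b) end. field. lra. }
  destruct (MVT_gen G 0 1 (fun _ => 0)) as [x [_ Hx]].
  - rewrite Rmin_left, Rmax_right by lra. auto.
  - rewrite Rmin_left, Rmax_right by lra. auto.
  - assert (E0 : G 0 = 0).
    { unfold G, Phi. rewrite (RInt_ext _ (fun _ => 0)).
      - rewrite RInt_const. change (scal ?a ?b) with (a * b). match goal with |- ?a = ?b => change (@eq R a b) end. ring.
      - intros v _. rewrite clamp_id by lra. destruct r; [lia|]. unfold hf. cbn [Cpow].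
        replace (Xp 0 v) with C0 by (apply Ceq; unfold Xp; simpl; ring). rewrite Cmul_0_l, !Cmul_0_l.
        destruct Hpr as [-> | ->]; reflexivity. }
    assert (E1 : G 1 = CRI (fun v => pr (hf r c m (Xp 1 v))) (-PI) PI).
    { unfold G, Phi. apply RInt_ext. intros. rewrite clamp_id by lra. reflexivity. }
    rewrite <- E1. lra.
Qed.

Lemma Xp1 v : Xp 1 v = Cexpi v.
Proof. unfold Xp, Cexpi. f_equal; ring. Qed.

Lemma mean_zero r c m : (1 <= r)%nat ->
  (forall x, Cnorm2 x <= 1 -> Cnorm2 (qp c m x) <> 0) ->
  CInt (fun s => hf r c m (Cexpi s)) (-PI) PI = C0.
Proof.
  intros Hr Hst.
  assert (Hc : forall u v, c2 (fun _ v => hf r c m (Xp 1 v)) u v).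
  { intros u v. apply (c2_hf r c m (fun _ v => Xp 1 v)). apply (c2_Xp (fun _ _ => 1)). apply continuity_2d_pt_const.
    apply Hst. rewrite Cnorm2_Xp. lra. }
  rewrite (CInt_ext _ (fun s => hf r c m (Xp 1 s))) by (intros; rewrite Xp1; auto).
  rewrite CInt_eq.
  - rewrite (mean_zero_pr r c m CRe), (mean_zero_pr r c m CIm); auto.
  - apply cok_cont. intros x; split.
    + exact (cont2_snd (fun _ v => CRe (hf r c m (Xp 1 v))) 0 x (proj1 (Hc 0 x))).
    + exact (cont2_snd (fun _ v => CIm (hf r c m (Xp 1 v))) 0 x (proj2 (Hc 0 x))).
Qed.

Lemma csum_last N f : csum (S N) f = Cadd (csum N f) (f (S N)).
Proof. reflexivity. Qed.

Lemma csum_first N f : csum (S N) f = Cadd (f O) (csum N (fun i => f (S i))).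
Proof.
  induction N. - simpl. reflexivity.
  - rewrite csum_last, IHN. simpl. cring.
Qed.

Lemma csum_delta N a g : csum N (fun i => if Nat.eqb i a then g i else C0) = if Nat.leb a N then g a else C0.
Proof.
  induction N.
  - destruct a; simpl; auto.
  - rewrite csum_last, IHN. destruct (Nat.eqb_spec (S N) a) as [<-|Hne].
    + replace (Nat.leb (S N) N) with false by (symmetry; apply Nat.leb_gt; lia).
      rewrite Nat.leb_refl. apply Cadd_0_l.
    + replace (Nat.eqb (S N) a) with false by (symmetry; apply Nat.eqb_neq; auto).
      destruct (Nat.leb_spec a N), (Nat.leb_spec a (S N)); try lia; apply Cadd_0_r.
Qed.

Lemma csum_delta_l N a g : csum N (fun i => if Nat.eqb a i then g i else C0) = if Nat.leb a N then g a else C0.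
Proof. rewrite <- csum_delta. apply csum_ext. intros. now rewrite Nat.eqb_sym. Qed.

Lemma csum_rev N f : csum N f = csum N (fun i => f (N - i)%nat).
Proof.
  revert f; induction N; intros f.
  - reflexivity.
  - rewrite csum_first, csum_last. rewrite (IHN (fun i => f (S i))). rewrite Nat.sub_diag.
    rewrite Cadd_comm. f_equal. apply csum_ext. intros. f_equal. lia.
Qed.

Lemma csum_extend N M f : (N <= M)%nat -> (forall i, (N < i <= M)%nat -> f i = C0) -> csum N f = csum M f.
Proof.
  intros H Hz. induction M.
  - assert (N = 0%nat) by lia. subst; auto.
  - destruct (Nat.eq_dec N (S M)) as [->|Hne]; auto.
    rewrite csum_last, <- IHM by (try lia; intros; apply Hz; lia). rewrite Hz by lia. cring.
Qed.

Lemma csum_shift N t g : (t <= N)%nat ->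
  csum N (fun j => if Nat.leb t j then g j else C0) = csum (N - t) (fun s => g (t + s)%nat).
Proof.
  intros H. induction N.
  - assert (t = 0%nat) by lia; subst. simpl. reflexivity.
  - destruct (Nat.eq_dec t (S N)) as [->|Hne].
    + rewrite Nat.sub_diag, csum_last, Nat.leb_refl. change (csum 0 ?h) with (h 0%nat). cbv beta. rewrite Nat.add_0_r.
      rewrite csum_zero. apply Cadd_0_l. intros i Hi. destruct (Nat.leb_spec (S N) i); try lia. reflexivity.
    + rewrite csum_last, IHN by lia. replace (S N - t)%nat with (S (N - t)) by lia.
      rewrite csum_last. rewrite (proj2 (Nat.leb_le _ _)) by lia. do 2 f_equal. lia.
Qed.

Lemma csum_tri N k f : (k <= N)%nat ->
  csum N (fun j => csum (Nat.min j k) (fun t => f j t)) = csum k (fun t => csum (N - t) (fun s => f (t + s)%nat t)).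
Proof.
  intros Hk.
  rewrite (csum_ext N _ (fun j => csum k (fun t => if Nat.leb t j then f j t else C0))).
  - rewrite csum_swap. apply csum_ext. intros t Ht. apply csum_shift. lia.
  - intros j Hj. destruct (Nat.le_ge_cases j k).
    + rewrite Nat.min_l by lia. rewrite <- (csum_extend j k (fun t => if Nat.leb t j then f j t else C0)) by (try lia; intros i Hi; rewrite (proj2 (Nat.leb_gt i j)) by lia; reflexivity).
      apply csum_ext. intros. rewrite (proj2 (Nat.leb_le _ _)) by lia. reflexivity.
    + rewrite Nat.min_r by lia. apply csum_ext. intros. rewrite (proj2 (Nat.leb_le _ _)) by lia. reflexivity.
Qed.

Lemma csum_prod N M a b : Cmul (csum N a) (csum M b) = csum N (fun i => csum M (fun j => Cmul (a i) (b j))).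
Proof. rewrite csum_mul_r. apply csum_ext. intros. apply csum_mul_l. Qed.

Lemma Cmul_conj_self x : Cmul x (Cconj x) = mkC (Cnorm2 x) 0.
Proof. cring. Qed.
Lemma Cnorm2_mul' a b : Cnorm2 (Cmul a b) = Cnorm2 a * Cnorm2 b.
Proof. unfold Cnorm2, Cmul; simpl; ring. Qed.
Lemma Cnorm2_pow z a : Cnorm2 z = 1 -> Cnorm2 (Cpow z a) = 1.
Proof. intros H; induction a; simpl. - unfold Cnorm2, C1; simpl; ring. - rewrite Cnorm2_mul', H, IHa; ring. Qed.
Lemma unit_pow z a : Cnorm2 z = 1 -> Cmul (Cpow z a) (Cconj (Cpow z a)) = C1.
Proof. intros H. rewrite Cmul_conj_self, Cnorm2_pow; auto. Qed.

Lemma pow_sub z a b : Cnorm2 z = 1 -> (b <= a)%nat ->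
  Cpow z (a - b) = Cmul (Cpow z a) (Cconj (Cpow z b)).
Proof.
  intros H Hb. replace a with ((a - b) + b)%nat at 2 by lia.
  rewrite Cpow_add, <- Cmul_assoc, unit_pow; auto. symmetry; apply Cmul_1_r.
Qed.

Definition Kf n m P z a b :=
  if andb (Nat.leb a m) (Nat.leb b m) then
    Csub (Cmul (pw n P a z) (Cconj (pw n P b z))) (Cmul (Cconj (pw n P (m - a) z)) (pw n P (m - b) z))
  else C0.

Lemma ptw_eval n m P z j : Cnorm2 z = 1 -> (j <= m)%nat ->
  csum n (fun i => Cmul (Pt n m P i j) (Cpow z i)) = Cmul (Cpow z n) (Cconj (pw n P (m - j) z)).
Proof.
  intros Hz Hj. unfold pw. rewrite csum_conj, csum_mul_l, csum_rev. apply csum_ext. intros i Hi.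
  unfold Pt. rewrite (proj2 (Nat.leb_le (n - i) n)) by lia. rewrite (proj2 (Nat.leb_le j m)) by lia. simpl.
  replace (n - (n - i))%nat with i by lia. rewrite pow_sub by (auto; lia). rewrite Cconj_mul. cring.
Qed.

Lemma zsum_qcoef n m P z j l : Cnorm2 z = 1 ->
  csum (2 * n) (fun i => Cmul (qcoef n m P i j l) (Cpow z i)) = Cmul (Cpow z n) (Kf n m P z j l).
Proof.
  intros Hz. unfold qcoef, Kf.
  destruct (andb (Nat.leb j m) (Nat.leb l m)) eqn:Hjl.
  2:{ rewrite csum_zero. cring. intros; apply Cmul_0_l. }
  apply Bool.andb_true_iff in Hjl. destruct Hjl as [Hj Hl]. apply Nat.leb_le in Hj, Hl.
  set (X := fun i1 i2 => Csub (Cmul (P i1 j) (Cconj (P i2 l))) (Cmul (Pt n m P i1 j) (Cconj (Pt n m P i2 l)))).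
  transitivity (csum n (fun i1 => csum n (fun i2 => Cmul (X i1 i2) (Cmul (Cpow z (i1 + n)) (Cconj (Cpow z i2)))))).
  - rewrite (csum_ext _ _ (fun i => csum n (fun i1 => csum n (fun i2 =>
        if Nat.eqb i (i1 + n - i2) then Cmul (X i1 i2) (Cpow z i) else C0)))).
    + rewrite csum_swap. apply csum_ext. intros i1 Hi1. rewrite csum_swap. apply csum_ext. intros i2 Hi2.
      rewrite (csum_delta (2 * n) (i1 + n - i2) (fun i => Cmul (X i1 i2) (Cpow z i))).
      rewrite (proj2 (Nat.leb_le _ _)) by lia. f_equal. apply pow_sub; auto; lia.
    + intros i Hi. rewrite csum_mul_r. apply csum_ext. intros i1 Hi1. rewrite csum_mul_r. apply csum_ext. intros i2 Hi2.
      destruct (Nat.eqb_spec (i1 + n) (i + i2)), (Nat.eqb_spec i (i1 + n - i2)); try lia.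
      * reflexivity.
      * apply Cmul_0_l.
  - assert (E1 : forall i1 i2, Cmul (X i1 i2) (Cmul (Cpow z (i1 + n)) (Cconj (Cpow z i2))) =
      Cmul (Cpow z n) (Csub (Cmul (Cmul (P i1 j) (Cpow z i1)) (Cconj (Cmul (P i2 l) (Cpow z i2))))
                            (Cmul (Cmul (Pt n m P i1 j) (Cpow z i1)) (Cconj (Cmul (Pt n m P i2 l) (Cpow z i2)))))).
    { intros. unfold X. rewrite Nat.add_comm, Cpow_add, !Cconj_mul. cring. }
    rewrite (csum_ext _ _ (fun i1 => Cmul (Cpow z n) (csum n (fun i2 => Csub (Cmul (Cmul (P i1 j) (Cpow z i1)) (Cconj (Cmul (P i2 l) (Cpow z i2))))
                            (Cmul (Cmul (Pt n m P i1 j) (Cpow z i1)) (Cconj (Cmul (Pt n m P i2 l) (Cpow z i2)))))))).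
    2:{ intros. rewrite csum_mul_l. apply csum_ext. intros. apply E1. }
    rewrite <- csum_mul_l. f_equal.
    rewrite (csum_ext _ _ (fun i1 => Csub (Cmul (Cmul (P i1 j) (Cpow z i1)) (Cconj (pw n P l z)))
                                          (Cmul (Cmul (Pt n m P i1 j) (Cpow z i1)) (Cconj (csum n (fun i2 => Cmul (Pt n m P i2 l) (Cpow z i2))))))).
    2:{ intros. rewrite csum_sub. unfold pw. rewrite !csum_conj, !csum_mul_l. reflexivity. }
    rewrite csum_sub, <- !csum_mul_r. rewrite !ptw_eval by auto. fold (pw n P j z).
    rewrite Cconj_mul, Cconj_conj.
    assert (U := unit_pow z n Hz).
    set (A := Cpow z n) in *. set (B := pw n P j z). set (C := pw n P l z). set (D := pw n P (m - j) z). set (E := pw n P (m - l) z).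
    transitivity (Csub (Cmul B (Cconj C)) (Cmul (Cmul A (Cconj A)) (Cmul (Cconj D) E))).
    + cring.
    + rewrite U. cring.
Qed.

Lemma zsum_acoef n m P k z j : Cnorm2 z = 1 ->
  csum (2 * n) (fun i => Cmul (acoef n m P k i j) (Cpow z i)) =
  Cmul (Cpow z n) (csum (Nat.min j k) (fun t => Kf n m P z (j - t) (k - t))).
Proof.
  intros Hz. unfold acoef.
  rewrite (csum_ext _ _ (fun i => csum (Nat.min j k) (fun t => Cmul (qcoef n m P i (j - t) (k - t)) (Cpow z i))))
    by (intros; apply csum_mul_r).
  rewrite csum_swap, csum_mul_l. apply csum_ext. intros. apply zsum_qcoef; auto.
Qed.

Lemma K_cancel n m P z k j : (k < m)%nat -> (m <= j)%nat ->
  csum k (fun t => Kf n m P z (j - t) (k - t)) = C0.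
Proof.
  intros Hk Hj. set (d := (j - m)%nat).
  destruct (Nat.le_gt_cases d k) as [Hd|Hd].
  - rewrite (csum_ext _ _ (fun t => if Nat.leb d t then Kf n m P z (j - t) (k - t) else C0)).
    2:{ intros t Ht. destruct (Nat.leb_spec d t); auto. unfold Kf.
        rewrite (proj2 (Nat.leb_gt (j - t) m)) by lia. reflexivity. }
    rewrite csum_shift by lia.
    set (X := fun u => Cmul (pw n P (m - u) z) (Cconj (pw n P (k - d - u) z))).
    rewrite (csum_ext _ _ (fun u => Csub (X u) (X (k - d - u)%nat))).
    + rewrite csum_sub. rewrite (csum_rev (k - d) (fun u => X (k - d - u)%nat)).
      rewrite (csum_ext (k - d) (fun i => X (k - d - (k - d - i))%nat) X).
      * apply Ceq; simpl; ring.
      * intros. f_equal. lia.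
    + intros u Hu. unfold Kf. rewrite (proj2 (Nat.leb_le (j - (d + u)) m)) by lia.
      rewrite (proj2 (Nat.leb_le (k - (d + u)) m)) by lia. simpl. unfold X.
      replace (j - (d + u))%nat with (m - u)%nat by lia.
      replace (k - (d + u))%nat with (k - d - u)%nat by lia.
      replace (m - (m - u))%nat with u by lia.
      replace (m - (k - (d + u)))%nat with (m - (k - d - u))%nat by lia.
      replace (k - d - (k - d - u))%nat with u by lia. cring.
  - apply csum_zero. intros t Ht. unfold Kf. rewrite (proj2 (Nat.leb_gt (j - t) m)) by lia. reflexivity.
Qed.

Definition qz n m P z w := csum m (fun s => Cmul (pw n P s z) (Cpow w s)).

Lemma peval2_qz n m P z w : peval2 P n m z w = qz n m P z w.
Proof.
  unfold peval2, qz, pw. rewrite csum_swap. apply csum_ext. intros. rewrite csum_mul_r.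
  apply csum_ext. intros. cring.
Qed.

Lemma wsum_K n m P z w b : Cnorm2 w = 1 -> (b <= m)%nat ->
  csum m (fun s => Cmul (Cpow w s) (Kf n m P z s b)) =
  Csub (Cmul (qz n m P z w) (Cconj (pw n P b z)))
       (Cmul (Cmul (Cpow w m) (Cconj (qz n m P z w))) (pw n P (m - b) z)).
Proof.
  intros Hw Hb.
  rewrite (csum_ext _ _ (fun s => Csub (Cmul (Cmul (pw n P s z) (Cpow w s)) (Cconj (pw n P b z)))
        (Cmul (Cmul (Cpow w s) (Cconj (pw n P (m - s) z))) (pw n P (m - b) z)))).
  2:{ intros s Hs. unfold Kf. rewrite (proj2 (Nat.leb_le s m)) by lia. rewrite (proj2 (Nat.leb_le b m)) by lia.
      simpl. cring. }
  rewrite csum_sub, <- !csum_mul_r. f_equal. f_equal.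
  unfold qz. rewrite csum_conj, csum_mul_l, csum_rev. apply csum_ext. intros s Hs.
  rewrite pow_sub by (auto; lia). replace (m - (m - s))%nat with s by lia. rewrite Cconj_mul. cring.
Qed.

Lemma F_repr n m P k z w : (1 <= m)%nat -> (k <= m - 1)%nat -> Cnorm2 z = 1 -> Cnorm2 w = 1 ->
  peval2 (acoef n m P k) (2 * n) (m - 1) z w =
  Cmul (Cpow z n) (csum k (fun t => Cmul (Cpow w t)
     (Csub (Cmul (qz n m P z w) (Cconj (pw n P (k - t) z)))
           (Cmul (Cmul (Cpow w m) (Cconj (qz n m P z w))) (pw n P (m - (k - t)) z))))).
Proof.
  intros Hm Hk Hz Hw. unfold peval2. rewrite csum_swap.
  rewrite (csum_ext _ _ (fun j => Cmul (Cpow z n) (Cmul (Cpow w j) (csum (Nat.min j k) (fun t => Kf n m P z (j - t) (k - t)))))).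
  2:{ intros j Hj. transitivity (Cmul (csum (2 * n) (fun i => Cmul (acoef n m P k i j) (Cpow z i))) (Cpow w j)).
      - rewrite csum_mul_r. apply csum_ext. intros. cring.
      - rewrite zsum_acoef by auto. cring. }
  rewrite <- csum_mul_l. f_equal.
  rewrite (csum_extend (m - 1) (m + k)).
  2: lia.
  2:{ intros j Hj. rewrite Nat.min_r by lia. rewrite K_cancel by lia. apply Cmul_0_r. }
  rewrite (csum_ext _ _ (fun j => csum (Nat.min j k) (fun t => Cmul (Cpow w j) (Kf n m P z (j - t) (k - t))))).
  2:{ intros; apply csum_mul_l. }
  rewrite csum_tri by lia. apply csum_ext. intros t Ht.
  rewrite <- (csum_extend m (m + k - t)).
  2: lia.
  2:{ intros s Hs. unfold Kf. rewrite (proj2 (Nat.leb_gt (t + s - t) m)) by lia. apply Cmul_0_r. }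
  rewrite <- wsum_K by (auto; lia). rewrite csum_mul_l. apply csum_ext. intros s Hs.
  replace (t + s - t)%nat with s by lia. rewrite Cpow_add. cring.
Qed.

Lemma Cinv_unit z : Cnorm2 z = 1 -> Cinv z = Cconj z.
Proof. intros H. unfold Cinv, Cconj. rewrite H. f_equal; field. Qed.

Lemma pbarw_conj n P j z : Cnorm2 z = 1 -> pbarw n P j (Cinv z) = Cconj (pw n P j z).
Proof.
  intros H. rewrite Cinv_unit by auto. unfold pbarw, pw. rewrite csum_conj. apply csum_ext. intros.
  rewrite Cconj_mul, Cconj_pow. reflexivity.
Qed.

Lemma Tm_repr n m P z k : (1 <= m)%nat -> (k <= m - 1)%nat -> Cnorm2 z = 1 ->
  Tm n m P z k k = csum k (fun t => Kf n m P z (k - t) (k - t)).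
Proof.
  intros Hm Hk Hz. unfold Tm.
  rewrite <- (csum_extend k (m - 1)) by (try lia; intros u Hu; unfold M1, M2, M3, M4;
    rewrite (proj2 (Nat.leb_gt u k)) by lia; cring).
  apply csum_ext. intros u Hu. unfold M1, M2, M3, M4, Kf.
  rewrite (proj2 (Nat.leb_le u k)) by lia. rewrite (proj2 (Nat.leb_le (k - u) m)) by lia. simpl.
  rewrite !pbarw_conj by auto. replace (m - (k - u))%nat with (m - k + u)%nat by lia. cring.
Qed.

Lemma Cnorm2_eq0 x : Cnorm2 x = 0 -> x = C0.
Proof. unfold Cnorm2. intros H. destruct x as [a b]; simpl in *. apply Ceq; simpl; nra. Qed.

Lemma Cnorm2_nz x : x <> C0 -> Cnorm2 x <> 0.
Proof. intros H E. apply H, Cnorm2_eq0, E. Qed.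

Lemma Cinv_def x : Cinv x = Cscale (/ Cnorm2 x) (Cconj x).
Proof. unfold Cinv. apply Ceq; simpl; unfold Rdiv; ring. Qed.

Lemma Cmul_inv x : Cnorm2 x <> 0 -> Cmul x (Cinv x) = C1.
Proof. intros H. unfold Cinv, Cnorm2 in *. apply Ceq; simpl; field; auto. Qed.

Lemma qp_qz n m P z x : qp (fun j => pw n P j z) m x = qz n m P z x.
Proof. reflexivity. Qed.

Lemma stable_q n m P z : stable n m P -> Cnorm2 z <= 1 ->
  forall x, Cnorm2 x <= 1 -> Cnorm2 (qp (fun j => pw n P j z) m x) <> 0.
Proof. intros Hs Hz x Hx. rewrite qp_qz, <- peval2_qz. apply Cnorm2_nz. apply Hs; auto. Qed.

Lemma CInt_conj F a b : cok F a b -> CInt (fun s => Cconj (F s)) a b = Cconj (CInt F a b).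
Proof.
  intros [H1 H2]. unfold CInt. apply Ceq; simpl; auto.
  rewrite !RInt_eq; auto.
  - exact (RInt_opp (V:=R_CompleteNormedModule) _ _ _ H2).
  - apply (ex_RInt_opp (V:=R_NormedModule)); auto.
Qed.

Lemma cok_c2 (F : R -> Cplx) : (forall s, c2 (fun _ s => F s) 0 s) -> cok F (-PI) PI.
Proof.
  intros H. apply cok_cont. intros x; split.
  - exact (cont2_snd (fun _ s => CRe (F s)) 0 x (proj1 (H x))).
  - exact (cont2_snd (fun _ s => CIm (F s)) 0 x (proj2 (H x))).
Qed.

Ltac solve_c2 :=
  repeat first
    [ apply c2_mul | apply c2_add | apply c2_sub | apply c2_conj | apply c2_pow
    | apply c2_expi1 | apply c2_expi2 | apply c2_const
    | apply c2_csum; intros ].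

Lemma c2_invq c m u s : (forall x, Cnorm2 x <= 1 -> Cnorm2 (qp c m x) <> 0) ->
  c2 (fun _ s => Cinv (qp c m (Cexpi s))) u s.
Proof.
  intros Hst. apply (c2_inv (fun _ s => qp c m (Cexpi s))).
  apply (c2_qp c m (fun _ s => Cexpi s)). apply c2_expi2.
  apply Hst. rewrite Cnorm2_expi; lra.
Qed.

Definition Ew c m a b := CInt (fun s => Cmul (Cmul (Cpow (Cexpi s) a) (Cconj (Cpow (Cexpi s) b))) (Cinv (qp c m (Cexpi s)))) (-PI) PI.

Lemma Ew_cok c m a b : (forall x, Cnorm2 x <= 1 -> Cnorm2 (qp c m x) <> 0) ->
  cok (fun s => Cmul (Cmul (Cpow (Cexpi s) a) (Cconj (Cpow (Cexpi s) b))) (Cinv (qp c m (Cexpi s)))) (-PI) PI.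
Proof.
  intros Hst. apply cok_c2. intros s. apply c2_mul. solve_c2. apply c2_invq; auto.
Qed.

Lemma Ew_zero c m a b : (forall x, Cnorm2 x <= 1 -> Cnorm2 (qp c m x) <> 0) -> (b < a)%nat ->
  Ew c m a b = C0.
Proof.
  intros Hst Hab. unfold Ew. rewrite <- (mean_zero (a - b) c m) by (auto; lia).
  apply CInt_ext. intros s. unfold hf. rewrite pow_sub by (try apply Cnorm2_expi; lia). reflexivity.
Qed.

Lemma Ew_shift c m a b l : Ew c m (a + l) (b + l) = Ew c m a b.
Proof.
  unfold Ew. apply CInt_ext. intros s. rewrite !Cpow_add, Cconj_mul.
  assert (U := unit_pow (Cexpi s) l (Cnorm2_expi s)).
  set (A := Cpow (Cexpi s) a) in *. set (B := Cpow (Cexpi s) b) in *. set (L := Cpow (Cexpi s) l) in *.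
  transitivity (Cmul (Cmul (Cmul A (Cconj B)) (Cmul L (Cconj L))) (Cinv (qp c m (Cexpi s)))).
  - cring.
  - rewrite U, Cmul_1_r. reflexivity.
Qed.

Lemma Ew_sum c m a b : (forall x, Cnorm2 x <= 1 -> Cnorm2 (qp c m x) <> 0) ->
  csum m (fun l => Cmul (c l) (Ew c m (l + a) b)) = if Nat.eqb a b then mkC (2 * PI) 0 else C0.
Proof.
  intros Hst. rewrite <- CInt_mono.
  unfold Ew. rewrite (csum_ext _ _ (fun l => CInt (fun s => Cmul (c l)
     (Cmul (Cmul (Cpow (Cexpi s) (l + a)) (Cconj (Cpow (Cexpi s) b))) (Cinv (qp c m (Cexpi s))))) (-PI) PI)).
  2:{ intros. rewrite CInt_mulc; auto. apply Ew_cok; auto. }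
  rewrite <- CInt_csum.
  2:{ intros. apply cok_mulc. apply Ew_cok; auto. }
  apply CInt_ext. intros s.
  assert (Hq : Cnorm2 (qp c m (Cexpi s)) <> 0) by (apply Hst; rewrite Cnorm2_expi; lra).
  assert (E : Cmul (qp c m (Cexpi s)) (Cinv (qp c m (Cexpi s))) = C1) by (apply Cmul_inv; auto).
  set (I := Cinv (qp c m (Cexpi s))) in *.
  transitivity (Cmul (Cmul (Cmul (Cpow (Cexpi s) a) (Cconj (Cpow (Cexpi s) b))) (qp c m (Cexpi s))) I).
  - unfold qp. rewrite csum_mul_l, csum_mul_r. apply csum_ext. intros. rewrite Cpow_add. cring.
  - rewrite <- Cmul_assoc, E. apply Cmul_1_r.
Qed.

Lemma Ew_key c m k j : (forall x, Cnorm2 x <= 1 -> Cnorm2 (qp c m x) <> 0) -> (k <= m)%nat ->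
  csum k (fun t => Cmul (c (k - t)%nat) (Ew c m j t)) = if Nat.eqb j k then mkC (2 * PI) 0 else C0.
Proof.
  intros Hst Hk. rewrite <- (Ew_sum c m j k) by auto.
  rewrite csum_rev.
  rewrite (csum_ext k _ (fun l => Cmul (c l) (Ew c m (l + j) k))).
  - apply csum_extend; auto. intros l Hl. rewrite Ew_zero by (auto; lia). apply Cmul_0_r.
  - intros l Hl. replace (k - (k - l))%nat with l by lia. f_equal.
    rewrite <- (Ew_shift c m j (k - l) l). f_equal; lia.
Qed.

Lemma cok_conj F a b : cok F a b -> cok (fun s => Cconj (F s)) a b.
Proof. intros [H1 H2]; split; simpl; auto. apply (ex_RInt_opp (V:=R_NormedModule)); auto. Qed.

Definition ee c m a b s := Cmul (Cmul (Cpow (Cexpi s) a) (Cconj (Cpow (Cexpi s) b))) (Cinv (qp c m (Cexpi s))).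

Lemma inner_pointwise n m P k z i j s : (1 <= m)%nat -> (k <= m - 1)%nat -> Cnorm2 z = 1 ->
  Cscale (/ Cnorm2 (peval2 P n m z (Cexpi s)))
     (Cmul (peval2 (acoef n m P k) (2 * n) (m - 1) z (Cexpi s)) (Cconj (monomial i j z (Cexpi s)))) =
  Cmul (Cmul (Cpow z n) (Cconj (Cpow z i)))
    (csum k (fun t => Csub (Cconj (Cmul (pw n P (k - t) z) (ee (fun l => pw n P l z) m j t s)))
                           (Cmul (pw n P (m - (k - t)) z) (ee (fun l => pw n P l z) m (m + t) j s)))).
Proof.
  intros Hm Hk Hz. rewrite F_repr by (auto; apply Cnorm2_expi).
  unfold ee, monomial. rewrite qp_qz, peval2_qz.
  set (w := Cexpi s). set (Q := qz n m P z w).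
  rewrite Cinv_def. fold Q.
  rewrite !Cscale_mul. repeat rewrite csum_mul_l. repeat rewrite csum_mul_r. repeat rewrite csum_mul_l. apply csum_ext. intros t Ht.
  rewrite Cpow_add. set (r := / Cnorm2 Q). set (c1 := pw n P (k - t) z). set (c2 := pw n P (m - (k - t)) z).
  set (Wm := Cpow w m). set (Wt := Cpow w t). set (Wj := Cpow w j). set (Zn := Cpow z n). set (Zi := Cpow z i).
  cring.
Qed.

Lemma inner_mono n m P k z i j : stable n m P -> (1 <= m)%nat -> (k <= m - 1)%nat -> (j <= m - 1)%nat ->
  Cnorm2 z = 1 ->
  CInt (fun s => Cscale (/ Cnorm2 (peval2 P n m z (Cexpi s)))
     (Cmul (peval2 (acoef n m P k) (2 * n) (m - 1) z (Cexpi s)) (Cconj (monomial i j z (Cexpi s))))) (-PI) PI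
  = if Nat.eqb j k then Cmul (mkC (2 * PI) 0) (Cmul (Cpow z n) (Cconj (Cpow z i))) else C0.
Proof.
  intros Hs Hm Hk Hj Hz.
  set (c := fun l => pw n P l z).
  assert (Hst : forall x, Cnorm2 x <= 1 -> Cnorm2 (qp c m x) <> 0) by (apply stable_q; auto; lra).
  assert (Hee : forall a b, cok (ee c m a b) (-PI) PI) by (intros; apply Ew_cok; auto).
  rewrite (CInt_ext _ _ _ _ (fun s => inner_pointwise n m P k z i j s Hm Hk Hz)).
  fold c. rewrite CInt_mulc.
  2:{ apply cok_csum. intros. apply cok_sub. apply cok_conj, cok_mulc; auto. apply cok_mulc; auto. }
  rewrite CInt_csum.
  2:{ intros. apply cok_sub. apply cok_conj, cok_mulc; auto. apply cok_mulc; auto. }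
  rewrite (csum_ext _ _ (fun t => Cconj (Cmul (c (k - t)%nat) (Ew c m j t)))).
  2:{ intros t Ht. rewrite CInt_sub by (try apply cok_conj; apply cok_mulc; auto).
      rewrite CInt_conj by (apply cok_mulc; auto). rewrite !CInt_mulc by auto.
      change (CInt (ee c m (m + t) j) (-PI) PI) with (Ew c m (m + t) j).
      rewrite Ew_zero by (auto; lia). rewrite Cmul_0_r, Csub_0_r. reflexivity. }
  rewrite <- csum_conj, Ew_key by (auto; lia).
  destruct (Nat.eqb j k); cring.
Qed.

Lemma CInt_0 a b : CInt (fun _ => C0) a b = C0.
Proof.
  unfold CInt. simpl. rewrite RInt_eq.
  - rewrite RInt_const. apply Ceq; simpl; change (scal ?x ?y) with (x * y); ring.
  - apply ex_RInt_const.
Qed.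

Lemma PI_ne : PI <> 0.
Proof. pose proof PI_RGT_0; lra. Qed.

Lemma ip_mono n m P k i j : stable n m P -> (1 <= m)%nat -> (k <= m - 1)%nat -> (j <= m - 1)%nat ->
  ip n m P (peval2 (acoef n m P k) (2 * n) (m - 1)) (monomial i j) =
  if andb (Nat.eqb i n) (Nat.eqb j k) then C1 else C0.
Proof.
  intros Hs Hm Hk Hj. unfold ip, torus_int.
  rewrite (CInt_ext _ (fun t => if Nat.eqb j k then Cmul (mkC (2 * PI) 0) (Cmul (Cpow (Cexpi t) n) (Cconj (Cpow (Cexpi t) i))) else C0)).
  2:{ intros t. apply inner_mono; auto. apply Cnorm2_expi. }
  destruct (Nat.eqb j k).
  - rewrite CInt_mulc by (apply cok_c2; intros; solve_c2). rewrite CInt_mono.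
    rewrite Nat.eqb_sym. destruct (Nat.eqb i n); simpl.
    + apply Ceq; simpl; field; apply PI_ne.
    + cring.
  - rewrite CInt_0. rewrite Bool.andb_false_r. cring.
Qed.

Lemma coef_extract N a V i0 : (i0 <= N)%nat ->
  (forall t, -PI <= t <= PI -> csum N (fun i => Cmul (a i) (Cpow (Cexpi t) i)) = V t) ->
  a i0 = Cscale (/ (2 * PI)) (CInt (fun t => Cmul (V t) (Cconj (Cpow (Cexpi t) i0))) (-PI) PI).
Proof.
  intros Hi H.
  rewrite <- (CInt_ext_ok (fun t => csum N (fun i => Cmul (a i) (Cmul (Cpow (Cexpi t) i) (Cconj (Cpow (Cexpi t) i0)))))).
  - rewrite CInt_csum.
    2:{ intros. apply cok_mulc. apply cok_c2; intros; solve_c2. }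
    rewrite (csum_ext _ _ (fun i => if Nat.eqb i i0 then Cmul (a i) (mkC (2 * PI) 0) else C0)).
    + rewrite csum_delta. rewrite (proj2 (Nat.leb_le _ _)) by auto.
      apply Ceq; simpl; field; apply PI_ne.
    + intros i _. rewrite CInt_mulc by (apply cok_c2; intros; solve_c2). rewrite CInt_mono.
      destruct (Nat.eqb i i0); cring.
  - apply cok_csum. intros. apply cok_mulc. apply cok_c2; intros; solve_c2.
  - intros t Ht. rewrite Rmin_left, Rmax_right in Ht by (pose proof PI_RGT_0; lra).
    rewrite <- H by auto. rewrite csum_mul_r. apply csum_ext. intros. cring.
Qed.

Lemma coef_zero N a : (forall t, -PI <= t <= PI -> csum N (fun i => Cmul (a i) (Cpow (Cexpi t) i)) = C0) ->
  forall i, (i <= N)%nat -> a i = C0.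
Proof.
  intros H i Hi. rewrite (coef_extract N a (fun _ => C0) i Hi H).
  rewrite (CInt_ext _ (fun _ => C0)) by (intros; apply Cmul_0_l). rewrite CInt_0. cring.
Qed.

Lemma acoef_support n m P k i j : (1 <= m)%nat -> (k <= m - 1)%nat ->
  (2 * n < i)%nat \/ (m - 1 < j)%nat -> acoef n m P k i j = C0.
Proof.
  intros Hm Hk [Hi|Hj].
  - unfold acoef. apply csum_zero. intros t _. unfold qcoef.
    destruct (andb _ _); auto. apply csum_zero; intros i1 Hi1; apply csum_zero; intros i2 Hi2.
    destruct (Nat.eqb_spec (i1 + n) (i + i2)); auto. lia.
  - destruct (Nat.le_gt_cases i (2 * n)) as [Hi|Hi].
    + apply (coef_zero (2 * n) (fun i => acoef n m P k i j)); auto.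
      intros t _. rewrite zsum_acoef by apply Cnorm2_expi.
      rewrite Nat.min_r by lia. rewrite K_cancel by lia. apply Cmul_0_r.
    + unfold acoef. apply csum_zero. intros t _. unfold qcoef.
      destruct (andb _ _); auto. apply csum_zero; intros i1 Hi1; apply csum_zero; intros i2 Hi2.
      destruct (Nat.eqb_spec (i1 + n) (i + i2)); auto. lia.
Qed.

Lemma C2_peval a N M : C2 (fun t s => peval2 a N M (Cexpi t) (Cexpi s)).
Proof. intros t s. unfold peval2. solve_c2. Qed.

Lemma C2_mono i j : C2 (fun t s => monomial i j (Cexpi t) (Cexpi s)).
Proof. intros t s. unfold monomial. solve_c2. Qed.

Lemma C2_ip n m P (A B : Cplx -> Cplx -> Cplx) : stable n m P ->
  C2 (fun t s => A (Cexpi t) (Cexpi s)) -> C2 (fun t s => B (Cexpi t) (Cexpi s)) ->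
  C2 (fun t s => Cscale (/ Cnorm2 (peval2 P n m (Cexpi t) (Cexpi s))) (Cmul (A (Cexpi t) (Cexpi s)) (Cconj (B (Cexpi t) (Cexpi s))))).
Proof.
  intros Hs HA HB t s. apply c2_scalef.
  - apply (c2_invnorm (fun t s => peval2 P n m (Cexpi t) (Cexpi s))). apply C2_peval.
    apply Cnorm2_nz. apply Hs; rewrite Cnorm2_expi; lra.
  - apply c2_mul. apply HA. apply c2_conj. apply HB.
Qed.

Lemma ip_expand_r n m P A b N M : stable n m P -> C2 (fun t s => A (Cexpi t) (Cexpi s)) ->
  ip n m P A (peval2 b N M) = csum N (fun i => csum M (fun j => Cmul (Cconj (b i j)) (ip n m P A (monomial i j)))).
Proof.
  intros Hs HA. unfold ip. rewrite !torus_int_TI.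
  rewrite (TI_ext _ (fun t s => csum N (fun i => csum M (fun j => Cmul (Cconj (b i j))
     (Cscale (/ Cnorm2 (peval2 P n m (Cexpi t) (Cexpi s))) (Cmul (A (Cexpi t) (Cexpi s)) (Cconj (monomial i j (Cexpi t) (Cexpi s))))))))).
  2:{ intros t s. unfold peval2 at 2. rewrite csum_conj, csum_mul_l, Cscale_mul, csum_mul_l. apply csum_ext. intros i _.
      rewrite csum_conj, csum_mul_l, csum_mul_l. apply csum_ext. intros j _. unfold monomial. rewrite !Cconj_mul. cring. }
  rewrite TI_csum.
  2:{ intros i _ t s. apply c2_csum. intros j _. apply c2_mul. apply c2_const. apply C2_ip; auto. apply C2_mono. }
  apply csum_ext. intros i _. rewrite TI_csum.
  2:{ intros j _ t s. apply c2_mul. apply c2_const. apply C2_ip; auto. apply C2_mono. }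
  apply csum_ext. intros j _. rewrite TI_mulc. reflexivity. apply C2_ip; auto. apply C2_mono.
Qed.

Lemma ip_sub_l n m P A B c D : stable n m P -> C2 (fun t s => A (Cexpi t) (Cexpi s)) ->
  C2 (fun t s => B (Cexpi t) (Cexpi s)) -> C2 (fun t s => D (Cexpi t) (Cexpi s)) ->
  ip n m P (fun z w => Csub (A z w) (Cmul c (B z w))) D = Csub (ip n m P A D) (Cmul c (ip n m P B D)).
Proof.
  intros Hs HA HB HD. unfold ip. rewrite !torus_int_TI.
  rewrite <- TI_mulc by (apply C2_ip; auto). rewrite <- TI_sub.
  - apply TI_ext. intros t s. rewrite !Cscale_mul. cring.
  - apply C2_ip; auto.
  - intros t s. apply c2_mul. apply c2_const. apply C2_ip; auto.
Qed.

Lemma ip_scale n m P A c : stable n m P -> C2 (fun t s => A (Cexpi t) (Cexpi s)) ->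
  ip n m P (fun z w => Cmul c (A z w)) (fun z w => Cmul c (A z w)) = Cmul (Cmul c (Cconj c)) (ip n m P A A).
Proof.
  intros Hs HA. unfold ip. rewrite !torus_int_TI. rewrite <- TI_mulc by (apply C2_ip; auto).
  apply TI_ext. intros. rewrite !Cscale_mul, Cconj_mul. cring.
Qed.

Lemma ip_self_zero n m P A : stable n m P -> C2 (fun t s => A (Cexpi t) (Cexpi s)) ->
  CRe (ip n m P A A) = 0 -> forall t s, -PI <= t <= PI -> -PI <= s <= PI -> A (Cexpi t) (Cexpi s) = C0.
Proof.
  intros Hs HA H0 t s Ht Hs'. unfold ip in H0. rewrite torus_int_TI in H0.
  assert (HP : forall t s, 0 < Cnorm2 (peval2 P n m (Cexpi t) (Cexpi s))).
  { intros. assert (Hn := Cnorm2_nz _ (Hs (Cexpi t0) (Cexpi s0) ltac:(rewrite Cnorm2_expi; lra) ltac:(rewrite Cnorm2_expi; lra))).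
    unfold Cnorm2 in *. destruct (peval2 P n m (Cexpi t0) (Cexpi s0)); simpl in *. nra. }
  assert (Z := TI_zero _ (C2_ip n m P A A Hs HA HA)).
  assert (Z' : CRe (Cscale (/ Cnorm2 (peval2 P n m (Cexpi t) (Cexpi s))) (Cmul (A (Cexpi t) (Cexpi s)) (Cconj (A (Cexpi t) (Cexpi s))))) = 0).
  { apply Z; auto. intros t0 s0. specialize (HP t0 s0).
    rewrite Cmul_conj_self. unfold Cscale; simpl. split. ring.
    apply Rmult_le_pos. left; apply Rinv_0_lt_compat; auto.
    unfold Cnorm2; nra. }
  rewrite Cmul_conj_self in Z'. unfold Cscale in Z'; simpl in Z'. specialize (HP t s).
  apply Rmult_integral in Z'. destruct Z' as [Z'|Z'].
  - exfalso. apply (Rinv_neq_0_compat _ (Rgt_not_eq _ _ HP)); auto.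
  - apply Cnorm2_eq0; auto.
Qed.

Lemma peval2_rearr h N M z w : peval2 h N M z w =
  csum M (fun j => Cmul (csum N (fun i => Cmul (h i j) (Cpow z i))) (Cpow w j)).
Proof.
  unfold peval2. rewrite csum_swap. apply csum_ext. intros. rewrite csum_mul_r. apply csum_ext. intros. cring.
Qed.

Lemma coef_zero2 h N M : (forall t s, -PI <= t <= PI -> -PI <= s <= PI -> peval2 h N M (Cexpi t) (Cexpi s) = C0) ->
  forall i j, (i <= N)%nat -> (j <= M)%nat -> h i j = C0.
Proof.
  intros H i j Hi Hj.
  assert (H1 : forall t, -PI <= t <= PI -> csum N (fun i => Cmul (h i j) (Cpow (Cexpi t) i)) = C0).
  { intros t Ht. apply (coef_zero M (fun j => csum N (fun i => Cmul (h i j) (Cpow (Cexpi t) i)))); auto.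
    intros s Hs. rewrite <- peval2_rearr. apply H; auto. }
  apply (coef_zero N (fun i => h i j)); auto.
Qed.

Lemma a_nk_formula n m P k : (1 <= m)%nat -> (k <= m - 1)%nat ->
  acoef n m P k n k = Cscale (/ (2 * PI)) (CInt (fun t => Tm n m P (Cexpi t) k k) (-PI) PI).
Proof.
  intros Hm Hk.
  rewrite (coef_extract (2 * n) (fun i => acoef n m P k i k) (fun t => Cmul (Cpow (Cexpi t) n) (Tm n m P (Cexpi t) k k)) n).
  - f_equal. apply CInt_ext. intros t.
    assert (U := unit_pow (Cexpi t) n (Cnorm2_expi t)).
    set (Z := Cpow (Cexpi t) n) in *. set (T := Tm n m P (Cexpi t) k k).
    transitivity (Cmul (Cmul Z (Cconj Z)) T). cring. rewrite U; cring.
  - lia.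
  - intros t _. rewrite zsum_acoef by apply Cnorm2_expi. rewrite Nat.min_id.
    rewrite Tm_repr by (auto; apply Cnorm2_expi). reflexivity.
Qed.

Lemma Tm_real n m P k t : (1 <= m)%nat -> (k <= m - 1)%nat -> CIm (Tm n m P (Cexpi t) k k) = 0.
Proof.
  intros Hm Hk. rewrite Tm_repr by (auto; apply Cnorm2_expi).
  assert (H : forall N f, (forall i, (i <= N)%nat -> CIm (f i) = 0) -> CIm (csum N f) = 0).
  { induction N; intros f Hf; simpl. apply Hf; lia. rewrite IHN, Hf; try lia. ring. intros; apply Hf; lia. }
  apply H. intros i _. unfold Kf. destruct (andb _ _); simpl; [ring|reflexivity].
Qed.

Lemma a_nk_real n m P k : (1 <= m)%nat -> (k <= m - 1)%nat -> CIm (acoef n m P k n k) = 0.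
Proof.
  intros Hm Hk. rewrite a_nk_formula by auto. unfold CInt, Cscale. simpl.
  rewrite (functional_extensionality (fun t => CIm (Tm n m P (Cexpi t) k k)) (fun _ => 0)).
  - rewrite RInt_eq by apply ex_RInt_const. rewrite RInt_const. change (scal ?x ?y) with (x * y). ring.
  - intros t. apply Tm_real; auto.
Qed.

Lemma ipFF n m P k : stable n m P -> (1 <= m)%nat -> (k <= m - 1)%nat ->
  ip n m P (peval2 (acoef n m P k) (2 * n) (m - 1)) (peval2 (acoef n m P k) (2 * n) (m - 1)) =
  Cconj (acoef n m P k n k).
Proof.
  intros Hs Hm Hk. rewrite ip_expand_r; auto. 2: apply C2_peval.
  rewrite (csum_ext _ _ (fun i => if Nat.eqb i n then Cconj (acoef n m P k i k) else C0)).
  - rewrite csum_delta. rewrite (proj2 (Nat.leb_le _ _)) by lia. reflexivity.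
  - intros i Hi. rewrite (csum_ext _ _ (fun j => if Nat.eqb j k then (if Nat.eqb i n then Cconj (acoef n m P k i j) else C0) else C0)).
    + rewrite csum_delta. rewrite (proj2 (Nat.leb_le _ _)) by lia. reflexivity.
    + intros j Hj. rewrite ip_mono by auto. destruct (Nat.eqb i n), (Nat.eqb j k); simpl; cring.
Qed.

Lemma peval2_sub f a c N M z w :
  peval2 (fun i j => Csub (f i j) (Cmul c (a i j))) N M z w = Csub (peval2 f N M z w) (Cmul c (peval2 a N M z w)).
Proof.
  unfold peval2. rewrite csum_mul_l, <- csum_sub. apply csum_ext. intros.
  rewrite csum_mul_l, <- csum_sub. apply csum_ext. intros. cring.
Qed.

Lemma peval2_mul f c N M z w :
  peval2 (fun i j => Cmul c (f i j)) N M z w = Cmul c (peval2 f N M z w).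
Proof.
  unfold peval2. rewrite csum_mul_l. apply csum_ext. intros.
  rewrite csum_mul_l. apply csum_ext. intros. cring.
Qed.

Theorem mainTheorem4 (n m : nat) (P : nat -> nat -> Cplx) (k : nat) :
  (1 <= n)%nat -> (1 <= m)%nat ->
  coeffs_bounded n m P -> exact_degree n m P -> stable n m P ->
  (k <= m - 1)%nat ->
  cond_abc n m P k (acoef n m P k) /\
  (forall f : nat -> nat -> Cplx, cond_abc n m P k f ->
     exists c : Cplx, Cabs c = 1 /\
       forall i j, f i j = Cmul c (acoef n m P k i j)).
Proof.
  intros Hn Hm Hbd Hdeg Hs Hk.
  set (F := peval2 (acoef n m P k) (2 * n) (m - 1)).
  assert (Hc : mkC (norm2 n m P F) 0 =
     Cscale (/ (2 * PI)) (CInt (fun t => Tm n m P (Cexpi t) k k) (- PI) PI)).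
  { unfold norm2, F. rewrite ipFF, <- a_nk_formula by auto.
    apply Ceq; simpl; auto. rewrite a_nk_real; auto; ring. }
  split.
  - unfold cond_abc. split; [|split; [|split]].
    + intros. apply acoef_support; auto.
    + intros i j Hi Hj Hjk. rewrite ip_mono by auto.
      rewrite (proj2 (Nat.eqb_neq j k) Hjk), Bool.andb_false_r. reflexivity.
    + intros i Hi Hin. rewrite ip_mono by auto.
      rewrite (proj2 (Nat.eqb_neq i n) Hin). reflexivity.
    + exact Hc.
  - intros f Hf. unfold cond_abc in Hf. destruct Hf as [Ha [Hb1 [Hb2 Hcf]]].
    set (G := peval2 f (2 * n) (m - 1)) in *.
    set (c := ip n m P G (monomial n k)).
    set (h := fun i j => Csub (f i j) (Cmul c (acoef n m P k i j))).
    assert (Hh : peval2 h (2 * n) (m - 1) = fun z w => Csub (G z w) (Cmul c (F z w))).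
    { apply functional_extensionality; intros z; apply functional_extensionality; intros w.
      apply peval2_sub. }
    assert (HipH : forall i j, (i <= 2 * n)%nat -> (j <= m - 1)%nat -> ip n m P (peval2 h (2 * n) (m - 1)) (monomial i j) = C0).
    { intros i j Hi Hj. rewrite Hh. rewrite ip_sub_l; auto; try apply C2_peval; try apply C2_mono.
      unfold F. rewrite ip_mono by auto.
      destruct (Nat.eqb_spec j k) as [->|Hjk].
      - destruct (Nat.eqb_spec i n) as [->|Hin]; simpl.
        + fold c. cring.
        + rewrite Hb2 by auto. cring.
      - rewrite Bool.andb_false_r, Hb1 by auto. cring. }
    assert (HHH : ip n m P (peval2 h (2 * n) (m - 1)) (peval2 h (2 * n) (m - 1)) = C0).
    { rewrite ip_expand_r by (auto; apply C2_peval). apply csum_zero. intros i Hi. apply csum_zero. intros j Hj.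
      rewrite HipH by auto. apply Cmul_0_r. }
    assert (Hh0 : forall i j, (i <= 2 * n)%nat -> (j <= m - 1)%nat -> h i j = C0).
    { apply coef_zero2. apply ip_self_zero with (n := n) (m := m) (P := P); auto. apply C2_peval.
      rewrite HHH. reflexivity. }
    assert (Hfc : forall i j, f i j = Cmul c (acoef n m P k i j)).
    { intros i j. destruct (Nat.le_gt_cases i (2 * n)), (Nat.le_gt_cases j (m - 1)).
      - specialize (Hh0 i j H H0). unfold h in Hh0. apply (f_equal (fun x => Cadd x (Cmul c (acoef n m P k i j)))) in Hh0.
        rewrite Cadd_0_l in Hh0. rewrite <- Hh0. cring.
      - rewrite Ha, acoef_support by (auto; lia). cring.
      - rewrite Ha, acoef_support by (auto; lia). cring.
      - rewrite Ha, acoef_support by (auto; lia). cring. }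
    destruct (Req_dec (CRe (acoef n m P k n k)) 0) as [H0|H0].
    + (* degenerate case: a_k = 0 *)
      assert (Ha0 : forall i j, (i <= 2 * n)%nat -> (j <= m - 1)%nat -> acoef n m P k i j = C0).
      { apply coef_zero2. apply ip_self_zero with (n := n) (m := m) (P := P); auto. apply C2_peval.
        rewrite ipFF by auto. simpl. exact H0. }
      exists C1. split.
      * unfold Cabs, Cnorm2, C1; simpl. replace (1 * 1 + 0 * 0) with 1 by ring. apply sqrt_1.
      * intros i j. rewrite Hfc. destruct (Nat.le_gt_cases i (2 * n)), (Nat.le_gt_cases j (m - 1)).
        -- rewrite Ha0 by auto. cring.
        -- rewrite acoef_support by (auto; lia). cring.
        -- rewrite acoef_support by (auto; lia). cring.
        -- rewrite acoef_support by (auto; lia). cring.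
    + exists c. split; auto.
      assert (HG : G = fun z w => Cmul c (F z w)).
      { apply functional_extensionality; intros z; apply functional_extensionality; intros w.
        unfold G, F. rewrite <- peval2_mul. unfold peval2. apply csum_ext; intros; apply csum_ext; intros.
        rewrite Hfc. reflexivity. }
      assert (E : norm2 n m P G = norm2 n m P F).
      { rewrite <- Hc in Hcf. apply (f_equal CRe) in Hcf. exact Hcf. }
      unfold norm2 in E. rewrite HG in E. rewrite ip_scale in E by (auto; apply C2_peval).
      unfold F in E. rewrite ipFF in E by auto.
      assert (Hi : CIm (acoef n m P k n k) = 0) by (apply a_nk_real; auto).
      clearbody c. revert E H0 Hi. generalize (acoef n m P k n k). intros [x y] E H0 Hi.
      destruct c as [a b]. unfold Cmul, Cconj in E. simpl in E, H0, Hi. subst y.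
      assert (Hn2 : a * a + b * b = 1).
      { apply Rmult_eq_reg_r with x; auto. nra. }
      unfold Cabs, Cnorm2. simpl. rewrite Hn2. apply sqrt_1.
Qed.
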